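(* Let $k\ge1$ and $B>0$ be constants. Consider the Ising model on the complete bipartite graph with parts $V_L,V_R$, $|V_L|=n$, $|V_R|=kn$, with $\beta_{uv}=-\frac12\log(1-\frac{B}{n\sqrt k})$ for all edges and $\gamma_v=0$ for all $v$. For each $n$ let $(\hat\alpha_L^{(n)},\hat\alpha_R^{(n)})$ be a phase maximizing $\Pr(\alpha_L,\alpha_R)$. Then as $n\to\infty$, $(\hat\alpha_L^{(n)},\hat\alpha_R^{(n)})\to(1/2,1/2)$ if $B\le2$, and $(\hat\alpha_L^{(n)},\hat\alpha_R^{(n)})\to(\alpha_L^*,\alpha_R^* )$ if $B>2$, where $(\alpha_L^*,\alpha_R^* )$ is the unique solution in $(1/2,1)^2$ of $\exp(B\sqrt k(1-2\alpha_R))=\frac{1-\alpha_L}{\alpha_L}$, $\exp(\frac{B}{\sqrt k}(1-2\alpha_L))=\frac{1-\alpha_R}{\alpha_R}$.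
   Context: Ising model: $\mu(\sigma)\propto\exp(\sum_{(u,v)\in E}\beta_{uv}\sigma_u\sigma_v)$ on $\{-1,1\}^{V_L\cup V_R}$. Phase: for $\sigma$, let $V_s(\sigma)$ be the set of vertices of spin $s$ and let $s$ be a spin with $|V_s(\sigma)|\ge(|V_L|+|V_R|)/2$; then $\alpha(\sigma)=\big(|V_s(\sigma)\cap V_L|/|V_L|,\,|V_s(\sigma)\cap V_R|/|V_R|\big)$. $\Pr(\alpha_L,\alpha_R)=\sum_{\sigma:\alpha(\sigma)=(\alpha_L,\alpha_R)}\mu(\sigma)$. *)

(* Defs.v *)
From Stdlib Require Import Reals List.
Import ListNotations.
Open Scope R_scope.

(* All spin configurations on m labelled vertices: lists of length m,
   true = spin +1, false = spin -1. *)
Fixpoint configs (m : nat) : list (list bool) :=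
  match m with
  | O => [ [] ]
  | S m' => flat_map (fun l => [true :: l; false :: l]) (configs m')
  end.

Definition spin (b : bool) : R := if b then 1 else -1.

Definition sumR {A : Type} (f : A -> R) (l : list A) : R :=
  fold_right Rplus 0 (map f l).

Definition beta (k : nat) (B : R) (n : nat) : R :=
  - / 2 * ln (1 - B / (INR n * sqrt (INR k))).

Definition energy (k : nat) (B : R) (n : nat) (sL sR : list bool) : R :=
  sumR (fun u => sumR (fun v => beta k B n * spin u * spin v) sR) sL.

Definition weight (k : nat) (B : R) (n : nat) (sL sR : list bool) : R :=
  exp (energy k B n sL sR).

Definition count_true (s : list bool) : nat := count_occ Bool.bool_dec s true.

(* Phase alpha(sigma). s is the majority spin; in case of an exact tie we take
   s = +1 (convention). *)
Definition phase (k : nat) (n : nat) (sL sR : list bool) : R * R :=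
  let pL := count_true sL in
  let pR := count_true sR in
  if Rle_dec (INR (n + k * n) / 2) (INR (pL + pR))
  then (INR pL / INR n, INR pR / INR (k * n))
  else (INR (n - pL) / INR n, INR (k * n - pR) / INR (k * n)).

Definition pair_eqb (a b : R * R) : bool :=
  if Req_EM_T (fst a) (fst b) then
    if Req_EM_T (snd a) (snd b) then true else false
  else false.

Definition Zpart (k : nat) (B : R) (n : nat) : R :=
  sumR (fun sL => sumR (fun sR => weight k B n sL sR) (configs (k * n))) (configs n).

Definition Pr (k : nat) (B : R) (n : nat) (a : R * R) : R :=
  sumR (fun sL => sumR (fun sR =>
          if pair_eqb (phase k n sL sR) a then weight k B n sL sR else 0)
        (configs (k * n))) (configs n) / Zpart k B n.

(* Main.v *)
Require Import Defs.
From Stdlib Require Import Reals.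
Open Scope R_scope.
From Coquelicot Require Import Coquelicot.
From Stdlib Require Import Lra Lia Psatz List Classical ZArith.
Import ListNotations.
Open Scope R_scope.


Lemma mvt_open (f df : R -> R) a b : a < b ->
  (forall x, a < x < b -> is_derive f x (df x)) ->
  (forall x, a <= x <= b -> continuity_pt f x) ->
  exists c, a < c < b /\ f b - f a = df c * (b - a).
Proof.
  intros hab hd hc.
  assert (pr1 : forall c, a < c < b -> derivable_pt f c).
  { intros c hc'. exists (df c). apply is_derive_Reals. now apply hd. }
  assert (pr2 : forall c, a < c < b -> derivable_pt id c).
  { intros c _. apply derivable_pt_id. }
  destruct (MVT f id a b pr1 pr2 hab hc) as [c [P e]].
  { intros; apply derivable_continuous_pt, derivable_pt_id. }
  exists c; split; auto.
  rewrite (derive_pt_eq_0 _ _ (df c)) in e by (apply is_derive_Reals; now apply hd).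
  rewrite (derive_pt_eq_0 _ _ 1) in e by apply derivable_pt_lim_id.
  unfold id in e. lra.
Qed.

Lemma cont_of_deriv f x l : is_derive f x l -> continuity_pt f x.
Proof.
  intros h. apply continuity_pt_filterlim. apply (ex_derive_continuous f x).
  now exists l.
Qed.

Lemma incr_strict f df a b : a < b ->
  (forall x, a < x < b -> is_derive f x (df x)) ->
  (forall x, a <= x <= b -> continuity_pt f x) ->
  (forall x, a < x < b -> 0 < df x) -> f a < f b.
Proof.
  intros hab hd hc hp. destruct (mvt_open f df a b hab hd hc) as [c [hc1 e]].
  specialize (hp c hc1). nra.
Qed.

Lemma decr_strict f df a b : a < b ->
  (forall x, a < x < b -> is_derive f x (df x)) ->
  (forall x, a <= x <= b -> continuity_pt f x) ->
  (forall x, a < x < b -> df x < 0) -> f b < f a.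
Proof.
  intros hab hd hc hp. destruct (mvt_open f df a b hab hd hc) as [c [hc1 e]].
  specialize (hp c hc1). nra.
Qed.

Lemma ln_le' x y : 0 < x -> x <= y -> ln x <= ln y.
Proof. intros hx [h|h]. left; now apply ln_increasing. subst; lra. Qed.
Lemma exp_le' x y : x <= y -> exp x <= exp y.
Proof. intros [h|h]. left; now apply exp_increasing. subst; lra. Qed.
Lemma ln_le_sub1 x : 0 < x -> ln x <= x - 1.
Proof. intros hx. pose proof (exp_ineq1_le (ln x)). rewrite exp_ln in H; lra. Qed.
Lemma ln_lt_lt x y : 0 < x -> 0 < y -> ln x < ln y -> x < y.
Proof. apply ln_lt_inv. Qed.

Definition th (t : R) : R := (exp t - exp (- t)) / (exp t + exp (- t)).
Definition Lc (t : R) : R := ln (exp t + exp (- t)).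
Definition ath (w : R) : R := (ln (1 + w) - ln (1 - w)) / 2.

Lemma cosh_pos t : 0 < exp t + exp (- t).
Proof. pose proof (exp_pos t); pose proof (exp_pos (-t)); lra. Qed.

Lemma exp_m t : exp (- t) * exp t = 1.
Proof. rewrite <- exp_plus. replace (-t + t) with 0 by ring. apply exp_0. Qed.

Lemma th_alt t : th t = 1 - 2 / (exp (2 * t) + 1).
Proof.
  unfold th. pose proof (exp_pos t). pose proof (exp_m t).
  replace (2 * t) with (t + t) by ring. rewrite exp_plus.
  rewrite exp_Ropp. field. split; nra.
Qed.

Lemma th_incr s t : s < t -> th s < th t.
Proof.
  intros h. rewrite !th_alt. pose proof (exp_increasing (2*s) (2*t) ltac:(lra)).
  pose proof (exp_pos (2*s)).
  apply Rplus_lt_compat_l, Ropp_lt_contravar.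
  unfold Rdiv. apply Rmult_lt_compat_l. lra. apply Rinv_lt_contravar; nra.
Qed.

Lemma th_le s t : s <= t -> th s <= th t.
Proof. intros [h|h]. left; now apply th_incr. subst; lra. Qed.

Lemma th_0 : th 0 = 0.
Proof. unfold th. rewrite Ropp_0, exp_0. field. Qed.

Lemma th_odd t : th (- t) = - th t.
Proof. unfold th. rewrite Ropp_involutive. pose proof (cosh_pos t). field. lra. Qed.

Lemma th_bound t : -1 < th t < 1.
Proof.
  rewrite th_alt. pose proof (exp_pos (2*t)).
  assert (0 < 2 / (exp (2*t) + 1)) by (apply Rdiv_lt_0_compat; lra).
  assert (2 / (exp (2*t) + 1) < 2).
  { apply Rmult_lt_reg_r with (exp (2*t) + 1). lra. unfold Rdiv. rewrite Rmult_assoc, Rinv_l by lra. nra. }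
  lra.
Qed.

Lemma th_pos t : 0 < t -> 0 < th t.
Proof. intros; rewrite <- th_0; now apply th_incr. Qed.

Lemma ath_th t : ath (th t) = t.
Proof.
  unfold ath, th. pose proof (exp_pos t). pose proof (exp_pos (-t)). pose proof (cosh_pos t).
  replace (1 + (exp t - exp (- t)) / (exp t + exp (- t))) with (2 * exp t / (exp t + exp (-t))) by (field; lra).
  replace (1 - (exp t - exp (- t)) / (exp t + exp (- t))) with (2 * exp (-t) / (exp t + exp (-t))) by (field; lra).
  unfold Rdiv. rewrite !ln_mult; try lra; try (apply Rinv_0_lt_compat; lra).
  rewrite !ln_exp. field.
Qed.

Lemma th_ath w : -1 < w < 1 -> th (ath w) = w.
Proof.
  intros hw. rewrite th_alt. unfold ath.
  replace (2 * ((ln (1 + w) - ln (1 - w)) / 2)) with (ln (1+w) + - ln (1-w)) by field.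
  rewrite exp_plus, exp_Ropp, !exp_ln by lra. field. lra.
Qed.

Lemma ath_incr v w : -1 < v -> v < w -> w < 1 -> ath v < ath w.
Proof.
  intros. unfold ath. pose proof (ln_increasing (1+v) (1+w) ltac:(lra) ltac:(lra)).
  pose proof (ln_increasing (1-w) (1-v) ltac:(lra) ltac:(lra)). lra.
Qed.

Lemma th_lt t : 0 < t -> th t < t.
Proof.
  intros ht.
  set (f := fun s => s * (exp s + exp (-s)) - (exp s - exp (-s))).
  assert (hd : forall s, is_derive f s (s * (exp s - exp (-s)))).
  { intros s; unfold f; auto_derive; auto. ring. }
  assert (f 0 < f t).
  { apply (incr_strict f (fun s => s * (exp s - exp (-s))) 0 t); auto.
    intros; eapply cont_of_deriv; apply hd.
    intros x hx. apply Rmult_lt_0_compat; [lra|].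
    pose proof (exp_increasing (-x) x ltac:(lra)). lra. }
  unfold f in H. rewrite Ropp_0, exp_0 in H. unfold th.
  pose proof (cosh_pos t).
  apply Rmult_lt_reg_r with (exp t + exp (-t)); auto. unfold Rdiv.
  rewrite Rmult_assoc, Rinv_l by lra. lra.
Qed.

Lemma sinh2_gt s : 0 < s -> 4 * s < (exp s - exp (-s)) * (exp s + exp (-s)).
Proof.
  intros hs.
  set (p := fun x => (exp x - exp (-x)) * (exp x + exp (-x)) - 4 * x).
  assert (hd : forall x, is_derive p x (2 * ((exp x)^2 + (exp (-x))^2) - 4)).
  { intros x; unfold p; auto_derive; auto. ring. }
  assert (p 0 < p s).
  { apply (incr_strict p (fun x => 2 * ((exp x)^2 + (exp (-x))^2) - 4) 0 s hs); auto.
    intros; eapply cont_of_deriv; apply hd.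
    intros x hx. pose proof (exp_m x). pose proof (exp_increasing (-x) x ltac:(lra)).
    pose proof (exp_pos (-x)). nra. }
  unfold p in H. rewrite Ropp_0, exp_0 in H. lra.
Qed.

Lemma th_ratio s1 s2 : 0 < s1 -> s1 < s2 -> th s2 * s1 < th s1 * s2.
Proof.
  intros h1 h12.
  set (q := fun s => th s / s).
  set (dq := fun s => (s * (4 / (exp s + exp (-s))^2) - th s) / s^2).
  assert (hd : forall s, 0 < s -> is_derive q s (dq s)).
  { intros s hs; unfold q, dq, th. pose proof (cosh_pos s).
    auto_derive. split; [lra|split;[lra|auto]].
    rewrite exp_Ropp in *. pose proof (exp_pos s). field. split; [lra|split;[nra|lra]]. }
  assert (q s2 < q s1).
  { apply (decr_strict q dq s1 s2 h12).
    intros; apply hd; lra.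
    intros; eapply cont_of_deriv; apply hd; lra.
    intros x hx. unfold dq. apply Rdiv_neg_pos; [|apply pow_lt; lra].
    pose proof (cosh_pos x). pose proof (sinh2_gt x ltac:(lra)).
    unfold th. apply Rlt_minus. unfold Rdiv.
    apply Rmult_lt_reg_r with ((exp x + exp (-x))^2). apply pow_lt; lra.
    replace (x * (4 * / (exp x + exp (- x)) ^ 2) * (exp x + exp (- x)) ^ 2) with (4 * x) by (field; lra).
    replace ((exp x - exp (- x)) * / (exp x + exp (- x)) * (exp x + exp (- x)) ^ 2)
      with ((exp x - exp (- x)) * (exp x + exp (- x))) by (field; lra). lra. }
  unfold q in H. apply Rmult_lt_reg_r with (/ (s1 * s2)).
  apply Rinv_0_lt_compat; nra.
  replace (th s2 * s1 * / (s1 * s2)) with (th s2 / s2) by (field; lra).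
  replace (th s1 * s2 * / (s1 * s2)) with (th s1 / s1) by (field; lra). lra.
Qed.

Lemma th_lt_iff x y : th x < th y -> x < y.
Proof. intros h. destruct (Rlt_or_le x y) as [h'|h']; auto. pose proof (th_le y x h'). lra. Qed.

Lemma ath_gt w : 0 < w < 1 -> w < ath w.
Proof.
  intros hw. apply th_lt_iff. rewrite th_ath by lra. apply th_lt; lra.
Qed.

Definition phi (A S w : R) : R := A * th (S * w) - ath w.
Definition gfix (A S w : R) : R := th (A * th (S * w)).

Lemma phi_sign A S w : 0 < w < 1 ->
  (0 < phi A S w <-> w < gfix A S w) /\ (phi A S w < 0 <-> gfix A S w < w) /\
  (phi A S w = 0 <-> gfix A S w = w).
Proof.
  intros hw. unfold phi, gfix. assert (E : th (ath w) = w) by (apply th_ath; lra).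
  split; [|split]; split; intros h.
  - rewrite <- E at 1. apply th_incr; lra.
  - assert (h' : th (ath w) < th (A * th (S * w))) by now rewrite E.
    apply th_lt_iff in h'; lra.
  - rewrite <- E at 2. apply th_incr; lra.
  - assert (h' : th (A * th (S * w)) < th (ath w)) by now rewrite E.
    apply th_lt_iff in h'; lra.
  - assert (A * th (S * w) = ath w) by lra. now rewrite H.
  - destruct (Rtotal_order (A * th (S * w)) (ath w)) as [h'|[h'|h']].
    + apply th_incr in h'; lra.
    + lra.
    + apply th_incr in h'; lra.
Qed.

Lemma phi_neg_small A S w : 0 < A -> 0 < S -> A * S <= 1 -> 0 < w < 1 -> phi A S w < 0.
Proof.
  intros hA hS hAS hw. unfold phi. pose proof (ath_gt w hw).
  pose proof (th_lt (S*w) ltac:(nra)). nra.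
Qed.

Lemma gfix_ratio A S w1 w2 : 0 < A -> 0 < S -> 0 < w1 -> w1 < w2 ->
  gfix A S w2 * w1 < gfix A S w1 * w2.
Proof.
  intros hA hS h1 h12. unfold gfix.
  set (t1 := th (S*w1)). set (t2 := th (S*w2)).
  assert (ht1 : 0 < t1) by (apply th_pos; nra).
  assert (ht12 : t1 < t2) by (apply th_incr; nra).
  pose proof (th_ratio (S*w1) (S*w2) ltac:(nra) ltac:(nra)) as r1. fold t1 t2 in r1.
  pose proof (th_ratio (A*t1) (A*t2) ltac:(nra) ltac:(nra)) as r2.
  assert (p1 : 0 < th (A*t1)) by (apply th_pos; nra).
  assert (p2 : 0 < th (A*t2)) by (apply th_pos; nra).
  assert (r1' : t2 * w1 < t1 * w2) by nra.
  assert (r2' : th (A*t2) * t1 < th (A*t1) * t2) by nra.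
  (* th(At2) w1 t1 < th(At1) t2 w1 < th(At1) t1 w2 *)
  apply Rmult_lt_reg_r with t1; auto.
  apply Rlt_trans with (th (A*t1) * t2 * w1). nra. nra.
Qed.

Lemma phi_deriv0 A S : is_derive (phi A S) 0 (A * S - 1).
Proof.
  unfold phi, th, ath. auto_derive.
  - rewrite Rmult_0_r, Ropp_0, exp_0. repeat split; lra.
    rewrite !Rmult_0_r, !Ropp_0, !exp_0. field.
Qed.

Lemma phi_pos_near0 A S : 1 < A * S -> exists w, 0 < w < 1 /\ 0 < phi A S w.
Proof.
  intros h. pose proof (phi_deriv0 A S) as hd. apply is_derive_Reals in hd.
  destruct (hd ((A*S-1)/2) ltac:(lra)) as [d hdd].
  set (w := Rmin (d/2) (1/2)).
  assert (hw : 0 < w) by (unfold w; apply Rmin_pos; [pose proof (cond_pos d)|]; lra).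
  assert (hw1 : w <= 1/2) by apply Rmin_r.
  assert (hw2 : w <= d/2) by apply Rmin_l.
  exists w. split. lra.
  specialize (hdd w ltac:(lra)).
  assert (Rabs w < d) by (rewrite Rabs_right by lra; pose proof (cond_pos d); lra).
  specialize (hdd H). rewrite Rplus_0_l in hdd.
  assert (phi A S 0 = 0).
  { unfold phi, ath, th. rewrite Rmult_0_r, Ropp_0, exp_0, Rplus_0_r, Rminus_0_r. 
    replace (1-1) with 0 by ring. unfold Rdiv. rewrite Rmult_0_l, Rmult_0_r. ring. }
  rewrite H0, Rminus_0_r in hdd. apply Rabs_def2 in hdd.
  destruct hdd as [_ hl].
  assert (0 < phi A S w / w) by lra.
  unfold Rdiv in H1. apply Rmult_lt_reg_r with (/ w). now apply Rinv_0_lt_compat. lra.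
Qed.

Lemma gfix_cont A S : continuity (fun w => gfix A S w - w).
Proof.
  intros x. eapply cont_of_deriv. unfold gfix, th. auto_derive.
  - pose proof (cosh_pos (S*x)). pose proof (cosh_pos (A * ((exp (S * x) - exp (- (S * x))) / (exp (S * x) + exp (- (S * x)))))). repeat split; apply Rgt_not_eq, Rplus_lt_0_compat; apply exp_pos.
  - reflexivity.
Qed.

Lemma phi_roots A S : 0 < A -> 0 < S -> 1 < A * S ->
  exists w, 0 < w < 1 /\ phi A S w = 0 /\
    (forall v, 0 < v < w -> 0 < phi A S v) /\ (forall v, w < v < 1 -> phi A S v < 0).
Proof.
  intros hA hS h.
  destruct (phi_pos_near0 A S h) as [w0 [hw0 hp]].
  pose proof (proj1 (proj1 (phi_sign A S w0 hw0)) hp) as g0.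
  assert (g1 : gfix A S 1 - 1 < 0) by (unfold gfix; pose proof (th_bound (A * th (S * 1))); lra).
  destruct (IVT_gen _ w0 1 0 (gfix_cont A S)) as [x [hx ex]].
  { rewrite Rmin_right, Rmax_left by lra. lra. }
  rewrite Rmin_left, Rmax_right in hx by lra.
  assert (hx1 : x <> 1) by (intros ->; lra).
  assert (hxr : 0 < x < 1) by lra.
  exists x. split; auto. split.
  { apply (phi_sign A S x hxr). lra. }
  split.
  - intros v hv. apply (phi_sign A S v ltac:(lra)).
    pose proof (gfix_ratio A S v x hA hS ltac:(lra) ltac:(lra)). nra.
  - intros v hv. apply (phi_sign A S v ltac:(lra)).
    pose proof (gfix_ratio A S x v hA hS ltac:(lra) ltac:(lra)). nra.
Qed.

Lemma cpt_plus f g x : continuity_pt f x -> continuity_pt g x -> continuity_pt (fun y => f y + g y) x.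
Proof. intros; exact (continuity_pt_plus f g x H H0). Qed.
Lemma cpt_mult f g x : continuity_pt f x -> continuity_pt g x -> continuity_pt (fun y => f y * g y) x.
Proof. intros; exact (continuity_pt_mult f g x H H0). Qed.
Lemma cpt_opp f x : continuity_pt f x -> continuity_pt (fun y => - f y) x.
Proof. intros; exact (continuity_pt_opp f x H). Qed.
Lemma cpt_const c x : continuity_pt (fun _ => c) x.
Proof. apply continuity_pt_const. intros a b; reflexivity. Qed.
Lemma cpt_id x : continuity_pt (fun y => y) x.
Proof. apply derivable_continuous_pt, derivable_pt_id. Qed.
Lemma cpt_comp f g x : continuity_pt f x -> continuity_pt g (f x) -> continuity_pt (fun y => g (f y)) x.
Proof. intros; exact (continuity_pt_comp f g x H H0). Qed.

Definition xlx (x : R) : R := x * ln x.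
Definition Hn (x : R) : R := - (xlx x + xlx (1 - x)).

Lemma ln_nonpos x : x <= 0 -> ln x = 0.
Proof. intros h. unfold ln. destruct (Rlt_dec 0 x) as [h1|h1]. exfalso; lra. reflexivity. Qed.

Lemma xlx_small x : 0 < x <= 1 -> Rabs (xlx x) < 2 * sqrt x.
Proof.
  intros hx. unfold xlx. pose proof (sqrt_lt_R0 x ltac:(lra)) as hs.
  assert (e : ln x = 2 * ln (sqrt x)).
  { rewrite <- (sqrt_sqrt x) at 1 by lra. rewrite ln_mult by lra. ring. }
  assert (hs1 : sqrt x <= 1) by (rewrite <- sqrt_1; apply sqrt_le_1_alt; lra).
  assert (ln (sqrt x) <= 0).
  { rewrite <- ln_1. apply ln_le'; lra. }
  assert (- ln (sqrt x) < / sqrt x).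
  { rewrite <- ln_Rinv by lra. pose proof (ln_le_sub1 (/ sqrt x) ltac:(apply Rinv_0_lt_compat; lra)). lra. }
  rewrite Rabs_left1 by (rewrite e; nra).
  rewrite e. 
  assert (E2 : x = sqrt x * sqrt x) by (rewrite sqrt_sqrt; lra).
  assert (E3 : sqrt x * (- ln (sqrt x)) < sqrt x * / sqrt x) by (apply Rmult_lt_compat_l; lra).
  rewrite Rinv_r in E3 by lra. rewrite E2 at 1. nra.
Qed.

Lemma xlx_cont x : continuity_pt xlx x.
Proof.
  destruct (Rtotal_order x 0) as [h|[h|h]].
  - unfold continuity_pt, continue_in, limit1_in, limit_in. simpl. intros eps he.
    exists (- x). split. lra. intros y [_ hy]. unfold Rdist in *.
    unfold xlx. rewrite (ln_nonpos x), (ln_nonpos y) by (apply Rabs_def2 in hy; lra).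
    replace (y*0 - x*0) with 0 by ring. rewrite Rabs_R0. lra.
  - subst. unfold continuity_pt, continue_in, limit1_in, limit_in. simpl. intros eps he.
    exists (Rmin 1 ((eps/2)^2)). split. apply Rmin_pos; [lra| apply pow_lt; lra].
    intros y [_ hy]. unfold Rdist in *. rewrite Rminus_0_r in hy.
    unfold xlx at 2. rewrite Rmult_0_l, Rminus_0_r.
    pose proof (Rmin_l 1 ((eps/2)^2)). pose proof (Rmin_r 1 ((eps/2)^2)).
    destruct (Rle_or_lt y 0) as [hy0|hy0].
    + unfold xlx. rewrite ln_nonpos by auto. rewrite Rmult_0_r, Rabs_R0; lra.
    + rewrite Rabs_right in hy by lra.
      pose proof (xlx_small y ltac:(lra)).
      assert (sqrt y < eps / 2).
      { rewrite <- (sqrt_pow2 (eps/2)) by lra. apply sqrt_lt_1_alt. lra. }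
      lra.
  - apply (cont_of_deriv xlx x (ln x + 1)). unfold xlx. auto_derive. auto. field. lra.
Qed.

Lemma Hn_cont x : continuity_pt Hn x.
Proof.
  unfold Hn. apply cpt_opp, cpt_plus. apply xlx_cont.
  apply (cpt_comp (fun y => 1 - y) xlx). apply cpt_plus. apply cpt_const. apply cpt_opp, cpt_id.
  apply xlx_cont.
Qed.

Lemma Lc_deriv t : is_derive Lc t (th t).
Proof.
  unfold Lc, th. auto_derive. pose proof (cosh_pos t). lra. field. apply Rgt_not_eq, cosh_pos.
Qed.

Lemma kl_term y p : 0 <= y -> 0 < p -> y - p <= xlx y - y * ln p.
Proof.
  intros hy hp. unfold xlx. destruct hy as [hy|hy].
  - pose proof (ln_le_sub1 (p / y) ltac:(apply Rdiv_lt_0_compat; lra)).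
    unfold Rdiv in H. rewrite ln_mult, ln_Rinv in H by (try apply Rinv_0_lt_compat; lra).
    assert (y * (ln p - ln y) <= y * (p * / y - 1)) by (apply Rmult_le_compat_l; lra).
    replace (y * (p * / y - 1)) with (p - y) in H0 by (field; lra). lra.
  - subst. lra.
Qed.

Definition pt (t : R) : R := exp t / (exp t + exp (- t)).

Lemma pt_ln t : ln (pt t) = t - Lc t.
Proof. unfold pt, Lc, Rdiv. pose proof (cosh_pos t). rewrite ln_mult, ln_Rinv, ln_exp; try apply exp_pos; try lra. apply Rinv_0_lt_compat; lra. Qed.

Lemma qt_ln t : ln (1 - pt t) = - t - Lc t.
Proof.
  assert (1 - pt t = pt (- t)).
  { unfold pt. rewrite Ropp_involutive. pose proof (cosh_pos t). field. lra. }
  rewrite H, pt_ln. unfold Lc. rewrite Ropp_involutive, Rplus_comm. reflexivity.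
Qed.

Lemma pt_pos t : 0 < pt t < 1.
Proof.
  unfold pt. pose proof (exp_pos t). pose proof (exp_pos (-t)). pose proof (cosh_pos t). split.
  apply Rdiv_lt_0_compat; lra.
  apply Rmult_lt_reg_r with (exp t + exp (-t)); auto. unfold Rdiv. rewrite Rmult_assoc, Rinv_l by lra. lra.
Qed.

Lemma pt_th t : pt t = (1 + th t) / 2.
Proof. unfold pt, th. pose proof (cosh_pos t). field. lra. Qed.

Lemma KL y t : 0 <= y <= 1 -> Hn y + t * (2 * y - 1) <= Lc t.
Proof.
  intros hy. pose proof (pt_pos t).
  pose proof (kl_term y (pt t) ltac:(lra) ltac:(lra)).
  pose proof (kl_term (1 - y) (1 - pt t) ltac:(lra) ltac:(lra)).
  rewrite pt_ln in H0. rewrite qt_ln in H1. unfold Hn. nra.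
Qed.

Lemma KL_eq t : Hn (pt t) + t * (2 * pt t - 1) = Lc t.
Proof.
  unfold Hn, xlx. rewrite pt_ln, qt_ln. ring.
Qed.

Lemma Lc0 : Lc 0 = ln 2.
Proof. unfold Lc. rewrite Ropp_0, exp_0. f_equal; ring. Qed.

Lemma Hn_le y : 0 <= y <= 1 -> Hn y <= ln 2.
Proof. intros. pose proof (KL y 0 H). rewrite Lc0 in H0. lra. Qed.

Lemma Hn_half : Hn (1/2) = ln 2.
Proof.
  pose proof (KL_eq 0). rewrite Lc0 in H. unfold pt in H. rewrite Ropp_0, exp_0 in H.
  replace (1 / (1 + 1)) with (1/2) in H by field. lra.
Qed.

Lemma Hn_sym x : Hn (1 - x) = Hn x.
Proof. unfold Hn. replace (1 - (1 - x)) with x by ring. ring. Qed.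

Lemma Lc_even t : Lc (- t) = Lc t.
Proof. unfold Lc. rewrite Ropp_involutive, Rplus_comm. reflexivity. Qed.

Definition GenG (c1 c2 s w : R) : R := c1 * Hn ((1 + w) / 2) + c2 * Lc (s * w).

Lemma GenG_cont c1 c2 s w : continuity_pt (GenG c1 c2 s) w.
Proof.
  unfold GenG. apply cpt_plus; apply cpt_mult; try apply cpt_const.
  - apply (cpt_comp (fun y => (1 + y) / 2) Hn). 2: apply Hn_cont.
    apply (cont_of_deriv _ _ (/2)). auto_derive; auto. field.
  - apply (cont_of_deriv _ _ (s * th (s * w))). apply (is_derive_comp Lc (fun y => s * y)).
    apply Lc_deriv. auto_derive; auto. ring.
Qed.

Lemma GenG_deriv c1 c2 s w : 0 < c1 -> -1 < w < 1 ->
  is_derive (GenG c1 c2 s) w (c1 * phi (c2 * s / c1) s w).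
Proof.
  intros hc hw.
  assert (D : is_derive (GenG c1 c2 s) w
     (c1 * (- (ln ((1 + w) * / 2) - ln (1 + - ((1 + w) * / 2))) / 2) + c2 * (s * th (s * w)))).
  { unfold GenG, Hn, xlx, Lc, th. auto_derive.
    - repeat split; try lra. apply cosh_pos.
    - pose proof (cosh_pos (s*w)). field. repeat split; lra. }
  replace (c1 * phi (c2 * s / c1) s w) with
     (c1 * (- (ln ((1 + w) * / 2) - ln (1 + - ((1 + w) * / 2))) / 2) + c2 * (s * th (s * w))).
  exact D.
  unfold phi, ath.
  replace (1 + - ((1 + w) * / 2)) with ((1 - w) * / 2) by field.
  rewrite !ln_mult by (try apply Rinv_0_lt_compat; lra). field. lra.
Qed.

Lemma G_decr c1 c2 s w1 w2 : 0 < c1 -> -1 <= w1 -> w1 < w2 -> w2 <= 1 ->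
  (forall w, w1 < w < w2 -> phi (c2 * s / c1) s w < 0) -> GenG c1 c2 s w2 < GenG c1 c2 s w1.
Proof.
  intros hc h1 h12 h2 hp.
  apply (decr_strict _ (fun w => c1 * phi (c2 * s / c1) s w) w1 w2 h12).
  - intros; apply GenG_deriv; auto; lra.
  - intros; apply GenG_cont.
  - intros x hx. specialize (hp x hx). nra.
Qed.

Lemma G_incr c1 c2 s w1 w2 : 0 < c1 -> -1 <= w1 -> w1 < w2 -> w2 <= 1 ->
  (forall w, w1 < w < w2 -> 0 < phi (c2 * s / c1) s w) -> GenG c1 c2 s w1 < GenG c1 c2 s w2.
Proof.
  intros hc h1 h12 h2 hp.
  apply (incr_strict _ (fun w => c1 * phi (c2 * s / c1) s w) w1 w2 h12).
  - intros; apply GenG_deriv; auto; lra.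
  - intros; apply GenG_cont.
  - intros x hx. specialize (hp x hx). nra.
Qed.

Lemma gap_abstract (G : R -> R) c : 0 <= c < 1 ->
  (forall w1 w2, 0 <= w1 -> w1 < w2 -> w2 <= c -> G w1 < G w2) ->
  (forall w1 w2, c <= w1 -> w1 < w2 -> w2 <= 1 -> G w2 < G w1) ->
  forall d, 0 < d -> exists eta, 0 < eta /\
    forall w, 0 <= w <= 1 -> d <= Rabs (w - c) -> G w <= G c - eta.
Proof.
  intros hc hi hd d hd0.
  set (r := Rmin 1 (c + d)).
  assert (hr : c < r /\ r <= 1 /\ r <= c + d).
  { unfold r. split; [apply Rmin_glb_lt; lra|split; [apply Rmin_l|apply Rmin_r]]. }
  assert (er : G r < G c) by (apply hd; lra).
  destruct (Rle_dec 0 (c - d)) as [hl|hl].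
  - assert (el : G (c - d) < G c) by (apply hi; lra).
    exists (Rmin (G c - G r) (G c - G (c - d))). split.
    apply Rmin_pos; lra.
    intros w hw hwd. pose proof (Rmin_l (G c - G r) (G c - G (c - d))).
    pose proof (Rmin_r (G c - G r) (G c - G (c - d))).
    destruct (Rle_or_lt c w) as [hcw|hcw].
    + rewrite Rabs_right in hwd by lra.
      destruct (Req_dec w r) as [->|hne]. lra.
      assert (r <= w). { unfold r. apply Rle_trans with (c + d). apply Rmin_r. lra. }
      pose proof (hd r w ltac:(lra) ltac:(lra) ltac:(lra)). lra.
    + rewrite Rabs_left in hwd by lra.
      destruct (Req_dec w (c - d)) as [->|hne]. lra.
      pose proof (hi w (c - d) ltac:(lra) ltac:(lra) ltac:(lra)). lra.
  - exists (G c - G r). split. lra.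
    intros w hw hwd.
    destruct (Rle_or_lt c w) as [hcw|hcw].
    + rewrite Rabs_right in hwd by lra.
      destruct (Req_dec w r) as [->|hne]. lra.
      assert (r <= w). { unfold r. apply Rle_trans with (c + d). apply Rmin_r. lra. }
      pose proof (hd r w ltac:(lra) ltac:(lra) ltac:(lra)). lra.
    + rewrite Rabs_left in hwd by lra. lra.
Qed.

Definition Fr (K B x y : R) : R := Hn x + K * Hn y + (B * sqrt K / 2) * ((2 * x - 1) * (2 * y - 1)).

Section FR.
Variables K B : R.
Hypothesis hK : 1 <= K.
Hypothesis hB : 0 < B.
Let sq := sqrt K.
Let a := B * sq / 2.
Let b := B / (2 * sq).

Lemma sq_pos : 0 < sq.
Proof. unfold sq. apply sqrt_lt_R0. lra. Qed.
Lemma sq_sq : sq * sq = K.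
Proof. unfold sq. apply sqrt_sqrt. lra. Qed.
Lemma a_pos : 0 < a.
Proof. unfold a. pose proof sq_pos. nra. Qed.
Lemma b_pos : 0 < b.
Proof. unfold b. pose proof sq_pos. apply Rdiv_lt_0_compat; lra. Qed.
Lemma ab_eq : a * b = B^2 / 4.
Proof. unfold a, b. pose proof sq_pos. field. lra. Qed.
Lemma Kb_a : K * b / 1 = a.
Proof. unfold a, b. rewrite <- sq_sq. pose proof sq_pos. field. lra. Qed.
Lemma aK_b : 1 * a / K = b.
Proof. unfold a, b. rewrite <- sq_sq. pose proof sq_pos. field. lra. Qed.

Definition GL := GenG 1 K b.
Definition GR := GenG K 1 a.

Lemma F_le_GL x y : 0 <= y <= 1 -> Fr K B x y <= GL (2 * x - 1).
Proof.
  intros hy. unfold Fr, GL, GenG. replace ((1 + (2 * x - 1)) / 2) with x by field.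
  pose proof (KL y (b * (2 * x - 1)) hy).
  replace (B * sqrt K / 2 * ((2 * x - 1) * (2 * y - 1))) with (K * (b * (2 * x - 1) * (2 * y - 1))).
  nra. unfold b. fold sq. rewrite <- sq_sq. pose proof sq_pos. field. lra.
Qed.

Lemma F_le_GR x y : 0 <= x <= 1 -> Fr K B x y <= GR (2 * y - 1).
Proof.
  intros hx. unfold Fr, GR, GenG. replace ((1 + (2 * y - 1)) / 2) with y by field.
  pose proof (KL x (a * (2 * y - 1)) hx). unfold a in H. unfold sq in H.
  replace (B * sqrt K / 2 * ((2 * x - 1) * (2 * y - 1))) with (B * sqrt K / 2 * (2 * y - 1) * (2 * x - 1)) by ring. unfold a, sq. lra.
Qed.

Lemma GL0 : GL 0 = ln 2 + K * ln 2.
Proof. unfold GL, GenG. rewrite Rmult_0_r, Lc0. replace ((1+0)/2) with (1/2) by field. rewrite Hn_half. ring. Qed.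

Lemma F_center : Fr K B (1/2) (1/2) = ln 2 + K * ln 2.
Proof. unfold Fr. rewrite Hn_half. replace (2 * (1/2) - 1) with 0 by field. ring. Qed.

Lemma F_le_free x y : 0 <= x <= 1 -> 0 <= y <= 1 -> (2*x-1)*(2*y-1) <= 0 ->
  Fr K B x y <= ln 2 + K * ln 2.
Proof.
  intros hx hy huv. unfold Fr. pose proof (Hn_le x hx). pose proof (Hn_le y hy).
  pose proof a_pos. unfold a in H1. fold sq. nra.
Qed.

Lemma GenG_even c1 c2 s w : GenG c1 c2 s (- w) = GenG c1 c2 s w.
Proof.
  unfold GenG. replace ((1 + - w) / 2) with (1 - (1 + w) / 2) by field.
  rewrite Hn_sym. replace (s * - w) with (- (s * w)) by ring. rewrite Lc_even. reflexivity.
Qed.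


Definition gap_target (xs ys : R) := 1/2 <= xs < 1 /\ 1/2 <= ys < 1 /\
  forall d, 0 < d -> exists eta, 0 < eta /\ forall x y, 0 <= x <= 1 -> 0 <= y <= 1 ->
    (1 + K) / 2 <= x + K * y -> (d <= Rabs (x - xs) \/ d <= Rabs (y - ys)) ->
    Fr K B x y <= Fr K B xs ys - eta.

Lemma GL_decr_small : B <= 2 -> forall w1 w2, 0 <= w1 -> w1 < w2 -> w2 <= 1 -> GL w2 < GL w1.
Proof.
  intros hB2 w1 w2 h1 h12 h2. unfold GL. apply G_decr; try lra.
  intros w hw. rewrite Kb_a. apply phi_neg_small. apply a_pos. apply b_pos.
  rewrite ab_eq. nra. lra.
Qed.

Lemma GR_decr_small : B <= 2 -> forall w1 w2, 0 <= w1 -> w1 < w2 -> w2 <= 1 -> GR w2 < GR w1.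
Proof.
  intros hB2 w1 w2 h1 h12 h2. unfold GR. apply G_decr; try lra.
  intros w hw. rewrite aK_b. apply phi_neg_small. apply b_pos. apply a_pos.
  rewrite Rmult_comm, ab_eq. nra. lra.
Qed.

Lemma GR0 : GR 0 = ln 2 + K * ln 2.
Proof. unfold GR, GenG. rewrite Rmult_0_r, Lc0. replace ((1+0)/2) with (1/2) by field. rewrite Hn_half. ring. Qed.

Lemma gap_small : B <= 2 -> gap_target (1/2) (1/2).
Proof.
  intros hB2. split; [lra|split; [lra|]]. intros d hd.
  destruct (gap_abstract GL 0 ltac:(lra)
     ltac:(intros; lra) ltac:(intros; apply GL_decr_small; lra) (2*d) ltac:(lra)) as [e1 [he1 H1]].
  destruct (gap_abstract GR 0 ltac:(lra)
     ltac:(intros; lra) ltac:(intros; apply GR_decr_small; lra) (2*d) ltac:(lra)) as [e2 [he2 H2]].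
  exists (Rmin e1 e2). split. apply Rmin_pos; auto.
  pose proof (Rmin_l e1 e2). pose proof (Rmin_r e1 e2).
  intros x y hx hy _ [hdx|hdy]; rewrite F_center.
  - pose proof (F_le_GL x y hy).
    assert (GL (2*x-1) = GL (Rabs (2*x-1))).
    { destruct (Rle_or_lt 0 (2*x-1)). rewrite Rabs_right; lra. rewrite Rabs_left by lra.
      unfold GL. rewrite GenG_even. reflexivity. }
    specialize (H1 (Rabs (2*x-1))). rewrite Rminus_0_r, Rabs_Rabsolu in H1.
    assert (2 * d <= Rabs (2 * x - 1)).
    { replace (2*x-1) with (2*(x-1/2)) by field. rewrite Rabs_mult, Rabs_right by lra. lra. }
    assert (0 <= Rabs (2*x-1) <= 1) by (split; [apply Rabs_pos| apply Rabs_le; lra]).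
    specialize (H1 H6 H5). rewrite GL0 in H1. lra.
  - pose proof (F_le_GR x y hx).
    assert (GR (2*y-1) = GR (Rabs (2*y-1))).
    { destruct (Rle_or_lt 0 (2*y-1)). rewrite Rabs_right; lra. rewrite Rabs_left by lra.
      unfold GR. rewrite GenG_even. reflexivity. }
    specialize (H2 (Rabs (2*y-1))). rewrite Rminus_0_r, Rabs_Rabsolu in H2.
    assert (2 * d <= Rabs (2 * y - 1)).
    { replace (2*y-1) with (2*(y-1/2)) by field. rewrite Rabs_mult, Rabs_right by lra. lra. }
    assert (0 <= Rabs (2*y-1) <= 1) by (split; [apply Rabs_pos| apply Rabs_le; lra]).
    specialize (H2 H6 H5). rewrite GR0 in H2. lra.
Qed.

Lemma root_unique A S w w' : 0 < A -> 0 < S -> 1 < A * S -> 0 < w < 1 -> phi A S w = 0 -> 0 < w' < 1 ->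
  phi A S w' = 0 -> w = w'.
Proof.
  intros hA hS h hw e hw' e'.
  destruct (phi_roots A S hA hS h) as [r [hr [er [h1 h2]]]].
  assert (forall z, 0 < z < 1 -> phi A S z = 0 -> z = r).
  { intros z hz ez. destruct (Rtotal_order z r) as [l|[l|l]]; auto.
    specialize (h1 z ltac:(lra)); lra. specialize (h2 z ltac:(lra)); lra. }
  rewrite (H w), (H w'); auto.
Qed.

Lemma gap_big : 2 < B -> exists us, 0 < us < 1 /\ phi a b us = 0 /\
   gap_target ((1 + us) / 2) ((1 + th (b * us)) / 2).
Proof.
  intros hB2. pose proof a_pos as ha. pose proof b_pos as hb.
  assert (hab : 1 < a * b) by (rewrite ab_eq; nra).
  destruct (phi_roots a b ha hb hab) as [us [hus [eus [hu1 hu2]]]].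
  set (vs := th (b * us)).
  assert (hvs : 0 < vs < 1) by (unfold vs; split; [apply th_pos; nra | apply th_bound]).
  assert (thav : th (a * vs) = us).
  { unfold phi in eus. unfold vs. replace (a * th (b * us)) with (ath us) by lra. apply th_ath; lra. }
  assert (evs : phi b a vs = 0).
  { unfold phi. rewrite thav. unfold vs. rewrite ath_th. ring. }
  assert (hba : 1 < b * a) by lra.
  destruct (phi_roots b a hb ha hba) as [vr [hvr [evr [hv1 hv2]]]].
  assert (vr = vs) by (apply (root_unique b a); auto).
  subst vr.
  exists us. split; auto. split; auto.
  unfold gap_target. fold vs. split; [lra|split; [lra|]].
  assert (FL : Fr K B ((1 + us) / 2) ((1 + vs) / 2) = GL us).
  { unfold Fr, GL, GenG. pose proof (KL_eq (b * us)). rewrite pt_th in H. fold vs in H.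
    replace (B * sqrt K / 2 * ((2 * ((1 + us) / 2) - 1) * (2 * ((1 + vs) / 2) - 1))) with
      (K * (b * us * (2 * ((1 + vs) / 2) - 1))).
    rewrite <- H. ring. unfold b. fold sq. rewrite <- sq_sq. pose proof sq_pos. field. lra. }
  assert (FR : Fr K B ((1 + us) / 2) ((1 + vs) / 2) = GR vs).
  { unfold Fr, GR, GenG. pose proof (KL_eq (a * vs)). rewrite pt_th in H. rewrite thav in H.
    replace (B * sqrt K / 2 * ((2 * ((1 + us) / 2) - 1) * (2 * ((1 + vs) / 2) - 1))) with
      (a * vs * (2 * ((1 + us) / 2) - 1)).
    rewrite <- H. ring. unfold a. fold sq. field. }
  intros d hd.
  assert (GLi : forall w1 w2, 0 <= w1 -> w1 < w2 -> w2 <= us -> GL w1 < GL w2).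
  { intros; unfold GL; apply G_incr; try lra. intros; rewrite Kb_a; apply hu1; lra. }
  assert (GLd : forall w1 w2, us <= w1 -> w1 < w2 -> w2 <= 1 -> GL w2 < GL w1).
  { intros; unfold GL; apply G_decr; try lra. intros; rewrite Kb_a; apply hu2; lra. }
  assert (GRi : forall w1 w2, 0 <= w1 -> w1 < w2 -> w2 <= vs -> GR w1 < GR w2).
  { intros; unfold GR; apply G_incr; try lra. intros; rewrite aK_b; apply hv1; lra. }
  assert (GRd : forall w1 w2, vs <= w1 -> w1 < w2 -> w2 <= 1 -> GR w2 < GR w1).
  { intros; unfold GR; apply G_decr; try lra. intros; rewrite aK_b; apply hv2; lra. }
  destruct (gap_abstract GL us ltac:(lra) GLi GLd (2*d) ltac:(lra)) as [e1 [he1 H1]].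
  destruct (gap_abstract GR vs ltac:(lra) GRi GRd (2*d) ltac:(lra)) as [e2 [he2 H2]].
  assert (e0 : GL 0 < GL us) by (apply GLi; lra).
  rewrite GL0 in e0.
  exists (Rmin (GL us - (ln 2 + K * ln 2)) (Rmin e1 e2)). split.
  { apply Rmin_pos; [lra|apply Rmin_pos; auto]. }
  pose proof (Rmin_l (GL us - (ln 2 + K * ln 2)) (Rmin e1 e2)).
  pose proof (Rmin_r (GL us - (ln 2 + K * ln 2)) (Rmin e1 e2)).
  pose proof (Rmin_l e1 e2). pose proof (Rmin_r e1 e2).
  intros x y hx hy hmaj hd'.
  destruct (Rle_or_lt (2*x-1) 0) as [hu|hu].
  { assert (Huv : (2*x-1)*(2*y-1) <= 0).
    { assert (0 <= 2*y-1) by nra. nra. }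
    pose proof (F_le_free x y hx hy Huv). lra. }
  destruct (Rle_or_lt (2*y-1) 0) as [hv|hv].
  { assert (Huv : (2*x-1)*(2*y-1) <= 0) by nra.
    pose proof (F_le_free x y hx hy Huv). lra. }
  destruct hd' as [hdx|hdy].
  - pose proof (F_le_GL x y hy).
    assert (hdd : 2 * d <= Rabs (2 * x - 1 - us)).
    { replace (2*x-1-us) with (2*(x-(1+us)/2)) by field. rewrite Rabs_mult, Rabs_right by lra. lra. }
    pose proof (H1 (2*x-1) ltac:(lra) hdd). lra.
  - pose proof (F_le_GR x y hx).
    assert (hdd : 2 * d <= Rabs (2 * y - 1 - vs)).
    { replace (2*y-1-vs) with (2*(y-(1+vs)/2)) by field. rewrite Rabs_mult, Rabs_right by lra. lra. }
    pose proof (H2 (2*y-1) ltac:(lra) hdd). lra.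
Qed.
End FR.


Lemma sumR_nil {A} (f : A -> R) : sumR f [] = 0.
Proof. reflexivity. Qed.
Lemma sumR_cons {A} (f : A -> R) x l : sumR f (x :: l) = f x + sumR f l.
Proof. reflexivity. Qed.
Lemma sumR_app {A} (f : A -> R) l1 l2 : sumR f (l1 ++ l2) = sumR f l1 + sumR f l2.
Proof. induction l1; simpl; unfold sumR in *; simpl; [ring|]. rewrite IHl1. ring. Qed.
Lemma sumR_flat_map {A B} (f : B -> R) (g : A -> list B) l :
  sumR f (flat_map g l) = sumR (fun x => sumR f (g x)) l.
Proof. induction l; simpl. reflexivity. rewrite sumR_app, sumR_cons, IHl. reflexivity. Qed.
Lemma sumR_ext {A} (f g : A -> R) l : (forall x, In x l -> f x = g x) -> sumR f l = sumR g l.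
Proof. induction l; intros h. reflexivity. rewrite !sumR_cons. f_equal. apply h; now left. apply IHl; intros; apply h; now right. Qed.
Lemma sumR_le {A} (f g : A -> R) l : (forall x, In x l -> f x <= g x) -> sumR f l <= sumR g l.
Proof. induction l; intros h; simpl. unfold sumR; simpl; lra. rewrite !sumR_cons.
  apply Rplus_le_compat. apply h; now left. apply IHl; intros; apply h; now right. Qed.
Lemma sumR_plus {A} (f g : A -> R) l : sumR (fun x => f x + g x) l = sumR f l + sumR g l.
Proof. induction l; simpl. unfold sumR; simpl; ring. rewrite !sumR_cons, IHl. ring. Qed.
Lemma sumR_scal {A} (f : A -> R) c l : sumR (fun x => c * f x) l = c * sumR f l.
Proof. induction l; simpl. unfold sumR; simpl; ring. rewrite !sumR_cons, IHl. ring. Qed.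
Lemma sumR_nonneg {A} (f : A -> R) l : (forall x, In x l -> 0 <= f x) -> 0 <= sumR f l.
Proof. intros h. pose proof (sumR_le (fun _ => 0) f l h).
  assert (sumR (fun _ : A => 0) l = 0) by (clear; induction l; [reflexivity| rewrite sumR_cons, IHl; ring]).
  lra. Qed.
Lemma sumR_zero {A} (f : A -> R) l : (forall x, In x l -> f x = 0) -> sumR f l = 0.
Proof. induction l; intros h. reflexivity. rewrite sumR_cons, h, IHl. ring. intros; apply h; now right. now left. Qed.
Lemma sumR_pos {A} (f : A -> R) l : (forall x, In x l -> 0 < f x) -> l <> [] -> 0 < sumR f l.
Proof.
  destruct l as [|x l]. intros _ h; now contradiction h.
  intros h _. rewrite sumR_cons. pose proof (h x (or_introl eq_refl)).
  pose proof (sumR_nonneg f l (fun y hy => Rlt_le _ _ (h y (or_intror hy)))). lra.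
Qed.

Lemma configs_S m : configs (S m) = flat_map (fun l => [true :: l; false :: l]) (configs m).
Proof. reflexivity. Qed.

Lemma sumR_configs_S (f : list bool -> R) m :
  sumR f (configs (S m)) = sumR (fun l => f (true :: l) + f (false :: l)) (configs m).
Proof.
  rewrite configs_S, sumR_flat_map. apply sumR_ext. intros x _. unfold sumR; simpl. ring.
Qed.

Lemma configs_len m s : In s (configs m) -> length s = m.
Proof.
  revert s; induction m; intros s h. simpl in h. destruct h as [<-|[]]. reflexivity.
  rewrite configs_S in h. apply in_flat_map in h. destruct h as [l [hl hs]].
  simpl in hs. destruct hs as [<-|[<-|[]]]; simpl; f_equal; auto.
Qed.

Lemma configs_ne m : configs m <> [].
Proof.
  induction m. discriminate. rewrite configs_S. destruct (configs m) as [|l ls]. congruence.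
  simpl. discriminate.
Qed.

Lemma count_true_cons_t l : count_true (true :: l) = S (count_true l).
Proof. reflexivity. Qed.
Lemma count_true_cons_f l : count_true (false :: l) = count_true l.
Proof. reflexivity. Qed.
Lemma count_true_le s : (count_true s <= length s)%nat.
Proof. induction s as [|[] s IH]. cbn; lia. rewrite count_true_cons_t; cbn [length]; lia. rewrite count_true_cons_f; cbn [length]; lia. Qed.

Definition indb (b : bool) : R := if b then 1 else 0.
Definition Nc (m j : nat) : R := sumR (fun s => indb (Nat.eqb (count_true s) j)) (configs m).

Lemma Nc_C m j : Nc m j = if Nat.leb j m then Binomial.C m j else 0.
Proof.
  revert j; induction m; intros j.
  - unfold Nc. simpl. destruct j; simpl; unfold sumR; simpl; unfold indb, Binomial.C; simpl; try field; ring.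
  - unfold Nc. rewrite sumR_configs_S. rewrite sumR_plus.
    assert (E1 : sumR (fun x => indb (count_true (false::x) =? j)%nat) (configs m) = Nc m j)
      by (apply sumR_ext; intros; reflexivity).
    rewrite E1. destruct j as [|j].
    + assert (E2 : sumR (fun x => indb (count_true (true::x) =? 0)%nat) (configs m) = 0)
        by (apply sumR_zero; intros; reflexivity).
      rewrite E2, IHm. simpl. unfold Binomial.C. rewrite !Nat.sub_0_r.
      pose proof (Factorial.lt_O_fact (S m)). pose proof (Factorial.lt_O_fact m). 
      assert (INR (Factorial.fact (S m)) <> 0) by (apply not_0_INR; lia).
      assert (INR (Factorial.fact m) <> 0) by (apply not_0_INR; lia).
      simpl (Factorial.fact 0). field. simpl INR. repeat split; auto; lra.
    + assert (E2 : sumR (fun x => indb (count_true (true::x) =? S j)%nat) (configs m) = Nc m j)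
        by (apply sumR_ext; intros; reflexivity).
      rewrite E2, !IHm.
      destruct (Nat.leb_spec (S j) (S m)); destruct (Nat.leb_spec j m); destruct (Nat.leb_spec (S j) m); try lia.
      * apply pascal. lia.
      * assert (j = m) by lia. subst. unfold Binomial.C. rewrite !Nat.sub_diag. simpl. field.
        pose proof (Factorial.lt_O_fact m). split; apply not_0_INR; lia.
      * ring.
Qed.


Lemma sum_term_le (f : nat -> R) N i : (forall j, (j <= N)%nat -> 0 <= f j) -> (i <= N)%nat ->
  f i <= sum_f_R0 f N.
Proof.
  induction N; intros h hi. simpl. assert (i = 0%nat) by lia. subst; lra.
  simpl. destruct (Nat.eq_dec i (S N)). subst. pose proof (cond_pos_sum f N). 
  assert (0 <= sum_f_R0 f N).
  { clear -h. induction N. simpl. apply h; lia. simpl. pose proof (h (S N) ltac:(lia)).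
    assert (0 <= sum_f_R0 f N) by (apply IHN; intros; apply h; lia). lra. }
  lra.
  pose proof (IHN (fun j hj => h j ltac:(lia)) ltac:(lia)). pose proof (h (S N) ltac:(lia)). lra.
Qed.

Lemma sum_le_max (f : nat -> R) N M : (forall j, (j <= N)%nat -> f j <= M) ->
  sum_f_R0 f N <= INR (S N) * M.
Proof.
  induction N; intros h. simpl. pose proof (h 0%nat ltac:(lia)). lra.
  simpl sum_f_R0. rewrite S_INR. pose proof (IHN (fun j hj => h j ltac:(lia))). pose proof (h (S N) ltac:(lia)).
  lra.
Qed.

Lemma pow_exp p i : 0 <= p -> (p = 0 -> i = 0%nat) -> p ^ i = exp (INR i * ln p).
Proof.
  intros hp h. destruct i. simpl. rewrite Rmult_0_l, exp_0. reflexivity.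
  destruct hp as [hp|hp]. rewrite <- ln_pow by auto. rewrite exp_ln. reflexivity. apply pow_lt; auto.
  symmetry in hp. specialize (h hp). discriminate.
Qed.

Section Binom.
Variables n i : nat.
Hypothesis hn : (0 < n)%nat.
Hypothesis hi : (i <= n)%nat.
Let p := INR i / INR n.
Let q := 1 - p.
Let T j := Binomial.C n j * p ^ j * q ^ (n - j).

Lemma nR_pos : 0 < INR n.
Proof. apply lt_0_INR; lia. Qed.

Lemma T_sum : sum_f_R0 T n = 1.
Proof. unfold T. rewrite <- binomial. unfold q. replace (p + (1 - p)) with 1 by ring. apply pow1. Qed.

Lemma C_nonneg j : 0 <= Binomial.C n j.
Proof.
  unfold Binomial.C. pose proof (Factorial.lt_O_fact n). pose proof (Factorial.lt_O_fact j).
  pose proof (Factorial.lt_O_fact (n - j)). apply Rlt_le, Rdiv_lt_0_compat. apply lt_0_INR; lia.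
  apply Rmult_lt_0_compat; apply lt_0_INR; lia.
Qed.

Lemma p_bounds : 0 <= p <= 1.
Proof.
  unfold p. pose proof nR_pos. split. unfold Rdiv. apply Rmult_le_pos. apply pos_INR. left; apply Rinv_0_lt_compat; auto.
  apply Rmult_le_reg_r with (INR n); auto. unfold Rdiv. rewrite Rmult_assoc, Rinv_l by lra.
  rewrite Rmult_1_l, Rmult_1_r. apply le_INR; auto.
Qed.

Lemma T_nonneg j : 0 <= T j.
Proof. unfold T. pose proof p_bounds. apply Rmult_le_pos. apply Rmult_le_pos. apply C_nonneg.
  apply pow_le; lra. apply pow_le; unfold q; lra. Qed.

Lemma T_le1 : T i <= 1.
Proof. rewrite <- T_sum. apply sum_term_le; auto. intros; apply T_nonneg. Qed.

Lemma T_exp : T i = Binomial.C n i * exp (- (INR n * Hn p)).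
Proof.
  unfold T. pose proof p_bounds. pose proof nR_pos.
  assert (INR i = INR n * p) by (unfold p; field; lra).
  assert (INR (n - i) = INR n * q) by (unfold q; rewrite minus_INR by auto; rewrite H1; ring).
  rewrite (pow_exp p i), (pow_exp q (n - i)); try (unfold q; lra).
  rewrite Rmult_assoc, <- exp_plus, H1, H2. unfold Hn, xlx, q. f_equal. f_equal. ring.
  intros hq. apply INR_eq. rewrite H2, hq, Rmult_0_r. reflexivity.
  intros hp. apply INR_eq. rewrite H1, hp, Rmult_0_r. reflexivity.
Qed.

Lemma C_upper : Binomial.C n i <= exp (INR n * Hn p).
Proof.
  pose proof T_le1. rewrite T_exp in H. rewrite exp_Ropp in H.
  pose proof (exp_pos (INR n * Hn p)).
  apply Rmult_le_reg_r with (/ exp (INR n * Hn p)). apply Rinv_0_lt_compat; auto.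
  rewrite Rinv_r; lra.
Qed.

Lemma T_step j : (j < n)%nat -> 0 < q -> T (S j) = T j * (INR (n - j) * p / (INR (S j) * q)).
Proof.
  intros hj hq. unfold T. rewrite pascal_step3 by auto.
  replace (n - j)%nat with (S (n - S j)) by lia. simpl pow.
  replace (S (n - S j)) with (n - j)%nat by lia.
  pose proof (lt_0_INR (S j) ltac:(lia)). field. lra.
Qed.

Lemma T_max j : (0 < i)%nat -> (i < n)%nat -> (j <= n)%nat -> T j <= T i.
Proof.
  intros hi0 hin hj. pose proof nR_pos.
  assert (hp : p = INR i / INR n) by reflexivity.
  assert (hq : q = INR (n - i) / INR n) by (unfold q, p; rewrite minus_INR by lia; field; lra).
  assert (qpos : 0 < q). { rewrite hq. apply Rdiv_lt_0_compat; auto. apply lt_0_INR; lia. }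
  assert (up : forall j, (S j <= i)%nat -> T j <= T (S j)).
  { intros j' hj'. rewrite T_step by (lia || auto). pose proof (T_nonneg j').
    assert (1 <= INR (n - j') * p / (INR (S j') * q)).
    { pose proof (lt_0_INR (S j') ltac:(lia)).
      apply Rmult_le_reg_r with (INR (S j') * q). nra. unfold Rdiv. rewrite Rmult_assoc, Rinv_l by nra.
      rewrite hp, hq, !minus_INR, S_INR by lia. apply le_INR in hj'. rewrite S_INR in hj'.
      apply Rmult_le_reg_r with (INR n); auto. field_simplify; try lra. pose proof (pos_INR i). assert (0 <= INR n * (INR i - INR j' - 1)) by (apply Rmult_le_pos; lra). nra. }
    nra. }
  assert (down : forall j, (i <= j)%nat -> (j < n)%nat -> T (S j) <= T j).
  { intros j' hj1 hj2. rewrite T_step by (lia || auto). pose proof (T_nonneg j').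
    assert (INR (n - j') * p / (INR (S j') * q) <= 1).
    { pose proof (lt_0_INR (S j') ltac:(lia)).
      apply Rmult_le_reg_r with (INR (S j') * q). nra. unfold Rdiv. rewrite Rmult_assoc, Rinv_l by nra.
      rewrite hp, hq, !minus_INR, S_INR by lia. apply le_INR in hj1. apply le_INR in hj2.
      apply Rmult_le_reg_r with (INR n); auto. field_simplify; try lra.
      assert (INR i <= INR n) by (apply le_INR; lia). nra. }
    nra. }
  destruct (Nat.le_gt_cases j i).
  - assert (forall d, T (i - d) <= T i).
    { induction d. rewrite Nat.sub_0_r. lra.
      destruct (Nat.le_gt_cases i d). replace (i - S d)%nat with (i - d)%nat by lia. auto.
      replace (i - d)%nat with (S (i - S d)) in IHd by lia. pose proof (up (i - S d)%nat ltac:(lia)). lra. }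
    replace j with (i - (i - j))%nat by lia. apply H1.
  - assert (forall d, (i + d <= n)%nat -> T (i + d) <= T i).
    { induction d; intros hd. rewrite Nat.add_0_r. lra.
      replace (i + S d)%nat with (S (i + d)) by lia. pose proof (down (i + d)%nat ltac:(lia) ltac:(lia)).
      pose proof (IHd ltac:(lia)). lra. }
    replace j with (i + (j - i))%nat by lia. apply H1. lia.
Qed.

Lemma C_lower : exp (INR n * Hn p) / INR (S n) <= Binomial.C n i.
Proof.
  pose proof (lt_0_INR (S n) ltac:(lia)). pose proof (exp_pos (INR n * Hn p)).
  destruct (Nat.eq_dec i 0) as [h0|h0].
  { subst. unfold p. rewrite Rdiv_0_l. unfold Hn, xlx. rewrite Rminus_0_r, ln_1, !Rmult_0_l, Rmult_0_r, Rplus_0_r, Ropp_0, Rmult_0_r, exp_0.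
    unfold Binomial.C. rewrite Nat.sub_0_r. simpl. pose proof (Factorial.lt_O_fact n).
    replace (INR (Factorial.fact n) / (1 * INR (Factorial.fact n))) with 1 by (field; apply not_0_INR; lia).
    apply Rmult_le_reg_r with (INR (S n)); auto. unfold Rdiv. rewrite Rmult_assoc, Rinv_l by lra. rewrite S_INR. pose proof (pos_INR n). lra. }
  destruct (Nat.eq_dec i n) as [h1|h1].
  { subst. unfold p. rewrite Rdiv_diag by (pose proof (lt_0_INR n hn); lra). unfold Hn, xlx. rewrite Rminus_diag, ln_1, Rmult_0_r, Rmult_0_l, Rplus_0_l, Ropp_0, Rmult_0_r, exp_0.
    unfold Binomial.C. rewrite Nat.sub_diag. simpl. pose proof (Factorial.lt_O_fact n).
    replace (INR (Factorial.fact n) / (INR (Factorial.fact n) * 1)) with 1 by (field; apply not_0_INR; lia).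
    apply Rmult_le_reg_r with (INR (S n)); auto. unfold Rdiv. rewrite Rmult_assoc, Rinv_l by lra. rewrite S_INR. pose proof (pos_INR n). lra. }
  assert (1 <= INR (S n) * T i).
  { rewrite <- T_sum. apply sum_le_max. intros; apply T_max; lia. }
  rewrite T_exp, exp_Ropp in H1.
  apply Rmult_le_reg_r with (INR (S n) * / exp (INR n * Hn p)).
  apply Rmult_lt_0_compat; auto. apply Rinv_0_lt_compat; auto.
  replace (exp (INR n * Hn p) / INR (S n) * (INR (S n) * / exp (INR n * Hn p))) with 1 by (field; lra).
  lra.
Qed.

End Binom.


Lemma sumR_scal_r {A} (f : A -> R) c l : sumR (fun x => f x * c) l = sumR f l * c.
Proof. rewrite <- (Rmult_comm c), <- sumR_scal. apply sumR_ext. intros; ring. Qed.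

Lemma spin_sum s : sumR spin s = 2 * INR (count_true s) - INR (length s).
Proof.
  induction s as [|[] s IH]. unfold sumR; simpl; ring.
  rewrite sumR_cons, IH, count_true_cons_t. cbn [length]. rewrite !S_INR. unfold spin. ring.
  rewrite sumR_cons, IH, count_true_cons_f. cbn [length]. rewrite !S_INR. unfold spin. ring.
Qed.

Section Ev.
Variables (k : nat) (B : R) (n : nat).
Let m := (k * n)%nat.
Let bt := beta k B n.

Definition wgt (i j : nat) : R := exp (bt * (2 * INR i - INR n) * (2 * INR j - INR m)).

Lemma weight_eq sL sR : In sL (configs n) -> In sR (configs m) ->
  weight k B n sL sR = wgt (count_true sL) (count_true sR).
Proof.
  intros hL hR. unfold weight, wgt, energy. f_equal.
  rewrite (sumR_ext _ (fun u => (bt * spin u) * sumR spin sR)).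
  2: { intros u _. rewrite <- sumR_scal. reflexivity. }
  rewrite (sumR_ext _ (fun u => spin u * (bt * sumR spin sR))) by (intros; ring).
  rewrite sumR_scal_r, !spin_sum, (configs_len n sL hL), (configs_len m sR hR). fold bt. ring.
Qed.

Definition majc (cL cR : nat) : nat * nat :=
  if Rle_dec (INR (n + m) / 2) (INR (cL + cR)) then (cL, cR) else ((n - cL)%nat, (m - cR)%nat).

Lemma phase_eq sL sR : phase k n sL sR =
  (INR (fst (majc (count_true sL) (count_true sR))) / INR n,
   INR (snd (majc (count_true sL) (count_true sR))) / INR m).
Proof. unfold phase, majc. destruct Rle_dec; reflexivity. Qed.

Lemma pair_eqb_true p a : pair_eqb p a = true -> p = a.
Proof.
  destruct p, a. unfold pair_eqb. simpl. destruct (Req_EM_T r r1); destruct (Req_EM_T r0 r2); try discriminate.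
  intros _; subst; reflexivity.
Qed.
Lemma pair_eqb_refl a : pair_eqb a a = true.
Proof. destruct a. unfold pair_eqb. simpl. destruct (Req_EM_T r r); [|congruence]. destruct (Req_EM_T r0 r0); congruence. Qed.

Definition Num (a : R * R) : R :=
  sumR (fun sL => sumR (fun sR =>
          if pair_eqb (phase k n sL sR) a then weight k B n sL sR else 0)
        (configs m)) (configs n).

Lemma Pr_Num a : Pr k B n a = Num a / Zpart k B n.
Proof. reflexivity. Qed.

Lemma Zpart_pos : 0 < Zpart k B n.
Proof.
  unfold Zpart. apply sumR_pos; [|apply configs_ne]. intros. apply sumR_pos; [|apply configs_ne].
  intros; apply exp_pos.
Qed.

Lemma ind_nonneg b : 0 <= indb b.
Proof. destruct b; simpl; lra. Qed.

Lemma term_nonneg sL sR a : 0 <= (if pair_eqb (phase k n sL sR) a then weight k B n sL sR else 0).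
Proof. destruct pair_eqb. left; apply exp_pos. lra. Qed.

Lemma double_prod (f g : list bool -> R) c :
  sumR (fun sL => sumR (fun sR => f sL * g sR * c) (configs m)) (configs n) =
  sumR f (configs n) * sumR g (configs m) * c.
Proof.
  rewrite (sumR_ext _ (fun sL => f sL * (sumR g (configs m) * c))).
  rewrite sumR_scal_r. ring.
  intros sL _. rewrite (sumR_ext _ (fun sR => g sR * (f sL * c))) by (intros; ring).
  rewrite sumR_scal_r. ring.
Qed.

Lemma Num_lower i0 j0 : (i0 <= n)%nat -> (j0 <= m)%nat -> INR (n + m) / 2 <= INR (i0 + j0) ->
  Nc n i0 * Nc m j0 * wgt i0 j0 <= Num (INR i0 / INR n, INR j0 / INR m).
Proof.
  intros h1 h2 h3. unfold Nc. rewrite <- double_prod. unfold Num.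
  apply sumR_le. intros sL hL. apply sumR_le. intros sR hR.
  destruct (Nat.eqb_spec (count_true sL) i0); destruct (Nat.eqb_spec (count_true sR) j0);
    idtac.
  all: try (cbn [indb]; ring_simplify; apply term_nonneg).
  cbn [indb]. rewrite phase_eq. unfold majc. rewrite e, e0. destruct Rle_dec; [|contradiction].
  simpl. rewrite pair_eqb_refl. rewrite weight_eq, e, e0 by auto. lra.
Qed.

Lemma wgt_sym i j : (i <= n)%nat -> (j <= m)%nat -> wgt (n - i) (m - j) = wgt i j.
Proof. intros. unfold wgt. rewrite !minus_INR by auto. f_equal. ring. Qed.

Lemma Num_upper i j : (0 < n)%nat -> (0 < m)%nat -> (i <= n)%nat -> (j <= m)%nat ->
  Num (INR i / INR n, INR j / INR m) <=
  (Nc n i * Nc m j + Nc n (n - i) * Nc m (m - j)) * wgt i j.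
Proof.
  intros hn hm h1 h2. rewrite Rmult_plus_distr_r. unfold Nc. rewrite <- !double_prod, <- sumR_plus.
  unfold Num. apply sumR_le. intros sL hL. rewrite <- sumR_plus. apply sumR_le. intros sR hR.
  pose proof (lt_0_INR n hn). pose proof (lt_0_INR m hm).
  destruct (pair_eqb (phase k n sL sR) _) eqn:E.
  2: { apply Rplus_le_le_0_compat; repeat apply Rmult_le_pos; try apply ind_nonneg; left; apply exp_pos. }
  apply pair_eqb_true in E. rewrite phase_eq in E. injection E as E1 E2.
  assert (F1 : INR (fst (majc (count_true sL) (count_true sR))) = INR i).
  { apply Rmult_eq_reg_r with (/ INR n). exact E1. apply Rinv_neq_0_compat; lra. }
  assert (F2 : INR (snd (majc (count_true sL) (count_true sR))) = INR j).
  { apply Rmult_eq_reg_r with (/ INR m). exact E2. apply Rinv_neq_0_compat; lra. }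
  apply INR_eq in F1, F2. rewrite weight_eq by auto.
  pose proof (count_true_le sL). pose proof (count_true_le sR).
  rewrite (configs_len n sL hL) in H1. rewrite (configs_len m sR hR) in H2.
  unfold majc in F1, F2. destruct Rle_dec; simpl in F1, F2.
  - rewrite F1, F2, !Nat.eqb_refl. replace (indb true) with 1 by reflexivity.
    assert (0 <= indb (i =? n - i)%nat * indb (j =? m - j)%nat * wgt i j) by
      (repeat apply Rmult_le_pos; try apply ind_nonneg; left; apply exp_pos). lra.
  - assert (count_true sL = (n - i)%nat) by lia. assert (count_true sR = (m - j)%nat) by lia.
    rewrite H3, H4, !Nat.eqb_refl, wgt_sym by auto. replace (indb true) with 1 by reflexivity.
    assert (0 <= indb (n - i =? i)%nat * indb (m - j =? j)%nat * wgt i j) by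
      (repeat apply Rmult_le_pos; try apply ind_nonneg; left; apply exp_pos). lra.
Qed.

Lemma Num_support a : 0 < Num a -> exists sL sR, In sL (configs n) /\ In sR (configs m) /\
   phase k n sL sR = a.
Proof.
  intros h. destruct (classic (exists sL sR, In sL (configs n) /\ In sR (configs m) /\ phase k n sL sR = a)) as [e|ne]; auto.
  exfalso. assert (Num a = 0).
  { unfold Num. apply sumR_zero. intros sL hL. apply sumR_zero. intros sR hR.
    destruct (pair_eqb _ a) eqn:E; auto. apply pair_eqb_true in E. exfalso; apply ne. eauto. }
  lra.
Qed.

End Ev.


Lemma lattice M r : 0 <= r <= INR M -> exists i, (i <= M)%nat /\ r <= INR i < r + 1.
Proof.
  induction M; intros h.
  - exists 0%nat. simpl in *. split; [lia|lra].
  - rewrite S_INR in h. destruct (Rle_or_lt r (INR M)) as [h1|h1].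
    + destruct (IHM ltac:(lra)) as [i [hi hr]]. exists i. split; [lia|lra].
    + exists (S M). rewrite S_INR. split; [lia|lra].
Qed.

Lemma nat_above r : exists N : nat, r < INR N.
Proof.
  destruct (Rlt_or_le r 0) as [h|h]. exists 0%nat. simpl; lra.
  destruct (archimed r) as [h1 h2].
  assert (0 <= up r)%Z. { apply le_IZR. simpl. lra. }
  exists (Z.to_nat (up r)). rewrite INR_IZR_INZ, Z2Nat.id by auto. lra.
Qed.

Lemma Hn_cont_eps xs eps : 0 < eps -> exists d, 0 < d /\ forall x, Rabs (x - xs) < d -> Rabs (Hn x - Hn xs) < eps.
Proof.
  intros he. pose proof (Hn_cont xs) as hc.
  unfold continuity_pt, continue_in, limit1_in, limit_in in hc. simpl in hc.
  destruct (hc eps he) as [d [hd H]]. exists d. split; auto. intros x hx.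
  destruct (Req_dec x xs) as [->|hne]. rewrite Rminus_diag, Rabs_R0; lra.
  apply H. split. split; [exact I|auto]. exact hx.
Qed.

Lemma abs_le_b z c : Rabs z <= c -> -c <= z <= c.
Proof. intros h. pose proof (Rle_abs z). pose proof (Rle_abs (-z)). rewrite Rabs_Ropp in H0. lra. Qed.

Lemma Fr_cont K B xs ys eta : 1 <= K -> 0 < B -> 0 <= ys <= 1 -> 0 < eta ->
  exists d, 0 < d /\ forall x y, 0 <= x <= 1 -> Rabs (x - xs) < d -> Rabs (y - ys) < d ->
    Fr K B xs ys - eta < Fr K B x y.
Proof.
  intros hK hB hy he.
  set (c := B * sqrt K / 2).
  assert (hc : 0 < c) by (unfold c; pose proof (sqrt_lt_R0 K ltac:(lra)); nra).
  destruct (Hn_cont_eps xs (eta/4) ltac:(lra)) as [d1 [hd1 H1]].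
  destruct (Hn_cont_eps ys (eta/(4*K)) ltac:(apply Rdiv_lt_0_compat; lra)) as [d2 [hd2 H2]].
  set (d3 := eta / (16 * c)).
  assert (hd3 : 0 < d3) by (unfold d3; apply Rdiv_lt_0_compat; lra).
  exists (Rmin d1 (Rmin d2 d3)). split. repeat apply Rmin_pos; auto.
  intros x y hx h1 h2.
  pose proof (Rmin_l d1 (Rmin d2 d3)). pose proof (Rmin_r d1 (Rmin d2 d3)).
  pose proof (Rmin_l d2 d3). pose proof (Rmin_r d2 d3).
  specialize (H1 x ltac:(lra)). specialize (H2 y ltac:(lra)).
  apply Rabs_def2 in H1. apply Rabs_def2 in H2.
  assert (K * Hn ys - eta / 4 < K * Hn y).
  { replace (eta/4) with (K * (eta / (4*K))) by (field; lra). nra. }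
  assert (P : c * ((2 * xs - 1) * (2 * ys - 1)) - eta / 4 <= c * ((2 * x - 1) * (2 * y - 1))).
  { assert (E : (2 * x - 1) * (2 * y - 1) - (2 * xs - 1) * (2 * ys - 1) =
               (2 * x - 1) * (2 * (y - ys)) + (2 * ys - 1) * (2 * (x - xs))) by ring.
    assert (A1 : Rabs ((2 * x - 1) * (2 * (y - ys))) <= 2 * d3).
    { rewrite Rabs_mult. replace (2 * d3) with (1 * (2 * d3)) by ring.
      apply Rmult_le_compat; try apply Rabs_pos. apply Rabs_le; lra.
      rewrite Rabs_mult, (Rabs_right 2) by lra. lra. }
    assert (A2 : Rabs ((2 * ys - 1) * (2 * (x - xs))) <= 2 * d3).
    { rewrite Rabs_mult. replace (2 * d3) with (1 * (2 * d3)) by ring.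
      apply Rmult_le_compat; try apply Rabs_pos. apply Rabs_le; lra.
      rewrite Rabs_mult, (Rabs_right 2) by lra. lra. }
    apply abs_le_b in A1. apply abs_le_b in A2.
    assert (4 * d3 * c = eta / 4) by (unfold d3; field; lra).
    nra. }
  unfold Fr. fold c. lra.
Qed.

Lemma beta_bound k B n : (1 <= k)%nat -> 0 < B -> (0 < n)%nat -> 2 * B <= INR n * sqrt (INR k) ->
  INR n * (B * sqrt (INR k) / 2) <= beta k B n * INR n * INR (k * n) <=
  INR n * (B * sqrt (INR k) / 2) + B ^ 2.
Proof.
  intros hk hB hn hb.
  set (K := INR k). set (N := INR n). set (s := sqrt K).
  assert (hK : 1 <= K) by (unfold K; apply (le_INR 1); lia).
  assert (hN : 0 < N) by (unfold N; apply lt_0_INR; lia).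
  assert (hs : 0 < s) by (unfold s; apply sqrt_lt_R0; lra).
  assert (ss : s * s = K) by (unfold s; apply sqrt_sqrt; lra).
  set (t := B / (N * s)).
  assert (ht : 0 < t <= 1/2).
  { unfold t. split. apply Rdiv_lt_0_compat; nra.
    apply Rmult_le_reg_r with (N * s). nra. unfold Rdiv. rewrite Rmult_assoc, Rinv_l by nra. change (2 * B <= N * s) in hb. lra. }
  unfold beta. fold K N s. fold t.
  rewrite mult_INR. fold K N.
  assert (l1 : ln (1 - t) <= - t) by (pose proof (ln_le_sub1 (1 - t) ltac:(lra)); lra).
  assert (l2 : - t / (1 - t) <= ln (1 - t)).
  { pose proof (ln_le_sub1 (/ (1 - t)) ltac:(apply Rinv_0_lt_compat; lra)).
    rewrite ln_Rinv in H by lra. replace (- t / (1 - t)) with (- (/ (1 - t) - 1)) by (field; lra). lra. }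
  assert (eK : K * N * N * t = N * (B * s)).
  { unfold t. rewrite <- ss. field. lra. }
  assert (eK2 : K * N * N * (t * t) = B * B).
  { unfold t. rewrite <- ss. field. lra. }
  assert (hKNN : 0 < K * N * N) by nra.
  split.
  - assert (- / 2 * ln (1 - t) * N * (K * N) = K * N * N * (- ln (1 - t) / 2)) by (field).
    rewrite H. assert (K * N * N * (t / 2) <= K * N * N * (- ln (1 - t) / 2)) by (apply Rmult_le_compat_l; lra).
    nra.
  - assert (- / 2 * ln (1 - t) * N * (K * N) = K * N * N * (- ln (1 - t) / 2)) by (field).
    rewrite H. assert (K * N * N * (- ln (1 - t) / 2) <= K * N * N * (t / (1 - t) / 2)).
    { apply Rmult_le_compat_l. lra. replace (t / (1 - t)) with (- (- t / (1 - t))) by (field; lra). lra. }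
    assert (t / (1 - t) / 2 = t / 2 + t * t / (2 * (1 - t))) by (field; lra).
    rewrite H1 in H0. rewrite Rmult_plus_distr_l in H0.
    assert (K * N * N * (t * t / (2 * (1 - t))) = B * B / (2 * (1 - t))).
    { rewrite <- eK2. field. lra. }
    assert (B * B / (2 * (1 - t)) <= B * B).
    { apply Rmult_le_reg_r with (2 * (1 - t)). lra. unfold Rdiv. rewrite Rmult_assoc, Rinv_l by lra. nra. }
    nra.
Qed.

Lemma uv_bound x y : 0 <= x <= 1 -> 0 <= y <= 1 -> -1 <= (2*x-1)*(2*y-1) <= 1.
Proof. intros. split; nra. Qed.

Lemma div_unit i n : (i <= n)%nat -> (0 < n)%nat -> 0 <= INR i / INR n <= 1.
Proof.
  intros h hn. pose proof (lt_0_INR n hn). apply le_INR in h. split.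
  unfold Rdiv. apply Rmult_le_pos. apply pos_INR. left; apply Rinv_0_lt_compat; auto.
  apply Rmult_le_reg_r with (INR n); auto. unfold Rdiv. rewrite Rmult_assoc, Rinv_l by lra. lra.
Qed.

Lemma compare k B n i0 j0 i j : (1 <= k)%nat -> 0 < B -> (0 < n)%nat ->
  2 * B <= INR n * sqrt (INR k) ->
  (i0 <= n)%nat -> (j0 <= k * n)%nat -> (i <= n)%nat -> (j <= k * n)%nat ->
  Nc n i0 * Nc (k * n) j0 * wgt k B n i0 j0 <=
  (Nc n i * Nc (k * n) j + Nc n (n - i) * Nc (k * n) (k * n - j)) * wgt k B n i j ->
  INR n * Fr (INR k) B (INR i0 / INR n) (INR j0 / INR (k * n)) - (2 * B ^ 2 + ln 2 + ln (INR (S n) * INR (S (k * n))))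
  <= INR n * Fr (INR k) B (INR i / INR n) (INR j / INR (k * n)).
Proof.
  intros hk hB hn hb h1 h2 h3 h4 H.
  set (m := (k * n)%nat) in *.
  assert (hm : (0 < m)%nat) by (unfold m; lia).
  rewrite !Nc_C in H.
  rewrite (proj2 (Nat.leb_le _ _) h1), (proj2 (Nat.leb_le _ _) h2), (proj2 (Nat.leb_le _ _) h3),
    (proj2 (Nat.leb_le _ _) h4), (proj2 (Nat.leb_le (n - i) n) ltac:(lia)),
    (proj2 (Nat.leb_le (m - j) m) ltac:(lia)) in H.
  set (nR := INR n) in *. set (mR := INR m) in *. set (K := INR k) in *.
  assert (hnR : 0 < nR) by (apply lt_0_INR; lia).
  assert (hK : 1 <= K) by (unfold K; apply (le_INR 1); lia).
  assert (emR : mR = K * nR) by (unfold mR, m, K, nR; apply mult_INR).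
  set (x0 := INR i0 / nR). set (y0 := INR j0 / mR). set (x := INR i / nR). set (y := INR j / mR).
  assert (hx0 : 0 <= x0 <= 1) by (apply div_unit; auto).
  assert (hy0 : 0 <= y0 <= 1) by (apply div_unit; auto).
  assert (hx : 0 <= x <= 1) by (apply div_unit; auto).
  assert (hy : 0 <= y <= 1) by (apply div_unit; auto).
  pose proof (C_lower n i0 hn h1) as L1. pose proof (C_lower m j0 hm h2) as L2.
  pose proof (C_upper n i hn h3) as U1. pose proof (C_upper m j hm h4) as U2.
  pose proof (C_upper n (n - i) hn ltac:(lia)) as U3. pose proof (C_upper m (m - j) hm ltac:(lia)) as U4.
  fold nR mR x0 y0 x y in L1, L2, U1, U2, U3, U4.
  assert (e3 : INR (n - i) / nR = 1 - x) by (unfold x; rewrite minus_INR by auto; fold nR; field; lra).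
  assert (hmR : 0 < mR) by (apply lt_0_INR; lia).
  assert (e4 : INR (m - j) / mR = 1 - y) by (unfold y; rewrite minus_INR by auto; fold mR; field; lra).
  rewrite e3, Hn_sym in U3. rewrite e4, Hn_sym in U4.
  unfold wgt in H. fold m nR mR in H.
  set (bt := beta k B n) in *.
  set (E0 := bt * (2 * INR i0 - nR) * (2 * INR j0 - mR)) in *.
  set (E1 := bt * (2 * INR i - nR) * (2 * INR j - mR)) in *.
  pose proof (exp_pos E0). pose proof (exp_pos E1).
  pose proof (lt_0_INR (S n) ltac:(lia)). pose proof (lt_0_INR (S m) ltac:(lia)).
  pose proof (exp_pos (nR * Hn x0)). pose proof (exp_pos (mR * Hn y0)).
  pose proof (exp_pos (nR * Hn x)). pose proof (exp_pos (mR * Hn y)).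
  assert (C_nn : forall a b, 0 <= Binomial.C a b) by (intros; unfold Binomial.C; pose proof (Factorial.lt_O_fact a);
    pose proof (Factorial.lt_O_fact b); pose proof (Factorial.lt_O_fact (a - b));
    apply Rlt_le, Rdiv_lt_0_compat; [apply lt_0_INR; lia| apply Rmult_lt_0_compat; apply lt_0_INR; lia]).
  assert (Lw : exp (nR * Hn x0) / INR (S n) * (exp (mR * Hn y0) / INR (S m)) * exp E0 <=
              Binomial.C n i0 * Binomial.C m j0 * exp E0).
  { apply Rmult_le_compat_r. lra. apply Rmult_le_compat; auto.
    apply Rlt_le, Rdiv_lt_0_compat; auto. apply Rlt_le, Rdiv_lt_0_compat; auto. }
  assert (Up : (Binomial.C n i * Binomial.C m j + Binomial.C n (n - i) * Binomial.C m (m - j)) * exp E1 <=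
               2 * (exp (nR * Hn x) * exp (mR * Hn y)) * exp E1).
  { apply Rmult_le_compat_r. lra.
    assert (Binomial.C n i * Binomial.C m j <= exp (nR * Hn x) * exp (mR * Hn y)) by (apply Rmult_le_compat; auto).
    assert (Binomial.C n (n - i) * Binomial.C m (m - j) <= exp (nR * Hn x) * exp (mR * Hn y)) by (apply Rmult_le_compat; auto).
    lra. }
  assert (Q : exp (nR * Hn x0 + mR * Hn y0 + E0) / (INR (S n) * INR (S m)) <=
              2 * exp (nR * Hn x + mR * Hn y + E1)).
  { rewrite !exp_plus. replace (exp (nR * Hn x0) * exp (mR * Hn y0) * exp E0 / (INR (S n) * INR (S m)))
      with (exp (nR * Hn x0) / INR (S n) * (exp (mR * Hn y0) / INR (S m)) * exp E0) by (field; lra).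
    lra. }
  apply ln_le' in Q. 2: { apply Rdiv_lt_0_compat. apply exp_pos. nra. }
  assert (D0 : 0 < INR (S n) * INR (S m)) by nra.
  rewrite ln_mult, ln_exp in Q by (try lra; apply exp_pos).
  unfold Rdiv in Q. rewrite ln_mult, ln_Rinv, ln_exp in Q by (try apply exp_pos; try apply Rinv_0_lt_compat; lra).
  pose proof (beta_bound k B n hk hB hn hb) as [bb1 bb2].
  fold bt nR m mR K in bb1, bb2.
  set (a := B * sqrt K / 2) in *.
  assert (eE0 : E0 = bt * nR * mR * ((2 * x0 - 1) * (2 * y0 - 1))).
  { unfold E0, x0, y0. field. split; lra. }
  assert (eE1 : E1 = bt * nR * mR * ((2 * x - 1) * (2 * y - 1))).
  { unfold E1, x, y. field. split; lra. }
  pose proof (uv_bound x0 y0 hx0 hy0). pose proof (uv_bound x y hx hy).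
  set (c := bt * nR * mR) in *.
  assert (FE0 : nR * Fr K B x0 y0 = nR * Hn x0 + mR * Hn y0 + nR * a * ((2 * x0 - 1) * (2 * y0 - 1))).
  { unfold Fr. fold a. rewrite emR. ring. }
  assert (FE1 : nR * Fr K B x y = nR * Hn x + mR * Hn y + nR * a * ((2 * x - 1) * (2 * y - 1))).
  { unfold Fr. fold a. rewrite emR. ring. }
  assert (hc0 : 0 <= c - nR * a <= B ^ 2) by lra.
  set (w0 := (2 * x0 - 1) * (2 * y0 - 1)) in *. set (w1 := (2 * x - 1) * (2 * y - 1)) in *.
  assert ((c - nR * a) * w0 <= B^2) by nra.
  assert (- B^2 <= (c - nR * a) * w1) by nra.
  rewrite eE0, eE1 in Q. rewrite FE0, FE1. nra.
Qed.

Lemma approx r i N : 0 < N -> N * r <= INR i < N * r + 1 -> Rabs (INR i / N - r) < / N.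
Proof.
  intros hN h. replace (INR i / N - r) with ((INR i - N * r) * / N) by (field; lra).
  rewrite Rabs_mult, (Rabs_right (/ N)) by (apply Rle_ge, Rlt_le, Rinv_0_lt_compat; lra).
  rewrite Rabs_right by lra. pose proof (Rinv_0_lt_compat N hN).
  replace (/ N) with (1 * / N) at 2 by ring. apply Rmult_lt_compat_r; lra.
Qed.

Lemma ln_le_sqrt y : 0 < y -> ln y <= 2 * sqrt y.
Proof.
  intros hy. pose proof (sqrt_lt_R0 y hy).
  assert (ln y = 2 * ln (sqrt y)).
  { rewrite <- (sqrt_sqrt y) at 1 by lra. rewrite ln_mult by lra. ring. }
  pose proof (ln_le_sub1 (sqrt y) H). lra.
Qed.

Lemma main_conv (k : nat) (B : R) (hk : (1 <= k)%nat) (hB : 0 < B)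
  (ahat : nat -> R * R)
  (hmax : forall n : nat, (1 <= n)%nat -> B < INR n * sqrt (INR k) ->
            forall a : R * R, Pr k B n a <= Pr k B n (ahat n))
  xs ys : gap_target (INR k) B xs ys ->
  forall eps, 0 < eps -> exists N, forall n, (N <= n)%nat ->
    Rabs (fst (ahat n) - xs) < eps /\ Rabs (snd (ahat n) - ys) < eps.
Proof.
  intros [hxs [hys hgap]] eps heps.
  set (K := INR k).
  assert (hK : 1 <= K) by (unfold K; apply (le_INR 1); lia).
  assert (hsK : 0 < sqrt K) by (apply sqrt_lt_R0; lra).
  destruct (hgap eps heps) as [eta [heta Hg]].
  destruct (Fr_cont K B xs ys (eta/2) hK hB ltac:(lra) ltac:(lra)) as [dl [hdl Hc]].
  set (c0 := 2 * B ^ 2 + 1).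
  set (c1 := 16 * sqrt (2 * K) / eta).
  assert (hc1 : 0 <= c1) by (unfold c1; apply Rmult_le_pos; [pose proof (sqrt_pos (2*K)); lra| left; apply Rinv_0_lt_compat; lra]).
  destruct (nat_above (1 + 2 * B / sqrt K + / dl + 4 * c0 / eta + c1 ^ 2)) as [N HN].
  assert (t1 : 0 <= 2 * B / sqrt K) by (apply Rlt_le, Rdiv_lt_0_compat; lra).
  assert (t2 : 0 < / dl) by (apply Rinv_0_lt_compat; lra).
  assert (t3 : 0 <= 4 * c0 / eta) by (unfold c0; apply Rlt_le, Rdiv_lt_0_compat; nra).
  assert (t4 : 0 <= c1 ^ 2) by (apply pow2_ge_0).
  exists N. intros n hn.
  assert (hnN : INR N <= INR n) by (apply le_INR; auto).
  set (nR := INR n) in *.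
  assert (hn1 : 1 < nR) by lra.
  assert (hn0 : (0 < n)%nat) by (apply INR_lt; change (INR 0) with 0; fold nR; lra).
  set (m := (k * n)%nat).
  assert (hm0 : (0 < m)%nat) by (unfold m; lia).
  set (mR := INR m).
  assert (emR : mR = K * nR) by (unfold mR, m, K, nR; apply mult_INR).
  assert (hb : 2 * B <= nR * sqrt K).
  { assert (2 * B / sqrt K < nR) by lra.
    apply Rmult_lt_compat_r with (r := sqrt K) in H; auto. unfold Rdiv in H.
    rewrite Rmult_assoc, Rinv_l in H by lra. lra. }
  assert (hmR : 0 < mR) by (rewrite emR; nra).
  destruct (lattice n (nR * xs) ltac:(fold nR; split; nra)) as [i0 [hi0 [hi0a hi0b]]].
  destruct (lattice m (mR * ys) ltac:(fold mR; split; nra)) as [j0 [hj0 [hj0a hj0b]]].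
  fold nR in hi0a, hi0b. fold mR in hj0a, hj0b.

  set (x0 := INR i0 / nR). set (y0 := INR j0 / mR).
  assert (hdl' : / nR < dl).
  { assert (/ dl < nR) by lra. apply Rinv_lt_contravar in H. rewrite Rinv_inv in H; auto.
    apply Rmult_lt_0_compat; lra. }
  assert (cx0 : Rabs (x0 - xs) < dl).
  { pose proof (approx xs i0 nR ltac:(lra) ltac:(lra)). fold x0 in H. lra. }
  assert (cy0 : Rabs (y0 - ys) < dl).
  { assert (/ mR <= / nR) by (apply Rinv_le_contravar; nra).
    pose proof (approx ys j0 mR ltac:(lra) ltac:(lra)). fold y0 in H0. lra. }
  assert (hx0 : 0 <= x0 <= 1) by (apply div_unit; auto).
  pose proof (Hc x0 y0 hx0 cx0 cy0) as Fx0.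
  assert (maj0 : INR (n + m) / 2 <= INR (i0 + j0)).
  { rewrite !plus_INR. fold nR mR. nra. }
  pose proof (hmax n ltac:(lia) ltac:(fold nR; fold K; nra) (INR i0 / INR n, INR j0 / INR m)) as HP.
  rewrite !Pr_Num in HP. pose proof (Zpart_pos k B n) as hZ.
  assert (HN' : Num k B n (INR i0 / INR n, INR j0 / INR m) <= Num k B n (ahat n)).
  { apply Rmult_le_reg_r with (/ Zpart k B n). apply Rinv_0_lt_compat; auto. exact HP. }
  pose proof (Num_lower k B n i0 j0 hi0 hj0 maj0) as HL.
  assert (pos0 : 0 < Nc n i0 * Nc m j0 * wgt k B n i0 j0).
  { rewrite !Nc_C, (proj2 (Nat.leb_le _ _) hi0), (proj2 (Nat.leb_le _ _) hj0).
    pose proof (C_lower n i0 hn0 hi0). pose proof (C_lower m j0 hm0 hj0).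
    pose proof (exp_pos (INR n * Hn (INR i0 / INR n))). pose proof (exp_pos (INR m * Hn (INR j0 / INR m))).
    pose proof (lt_0_INR (S n) ltac:(lia)). pose proof (lt_0_INR (S m) ltac:(lia)).
    assert (0 < Binomial.C n i0) by (eapply Rlt_le_trans; [|exact H]; apply Rdiv_lt_0_compat; auto).
    assert (0 < Binomial.C m j0) by (eapply Rlt_le_trans; [|exact H0]; apply Rdiv_lt_0_compat; auto).
    unfold wgt. pose proof (exp_pos (beta k B n * (2 * INR i0 - INR n) * (2 * INR (k * n) - INR (k * n)))).
    apply Rmult_lt_0_compat. nra. apply exp_pos. }
  destruct (Num_support k B n (ahat n) ltac:(fold m in HL; lra)) as [sL [sR [hL [hR hph]]]].
  rewrite phase_eq in hph.
  set (i := fst (majc k n (count_true sL) (count_true sR))) in hph.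
  set (j := snd (majc k n (count_true sL) (count_true sR))) in hph.
  pose proof (count_true_le sL) as cL. pose proof (count_true_le sR) as cR.
  rewrite (configs_len n sL hL) in cL. rewrite (configs_len _ sR hR) in cR.
  assert (hij : (i <= n)%nat /\ (j <= m)%nat /\ INR (n + m) / 2 <= INR (i + j)).
  { unfold i, j, majc. fold m. destruct Rle_dec as [r|r]; simpl. split; [lia|split; [lia|auto]].
    split; [lia|split; [lia|]]. rewrite !plus_INR, !minus_INR by lia. rewrite !plus_INR in r.
    apply Rnot_le_lt in r. lra. }
  destruct hij as [hi [hj majij]].
  fold m in hph. rewrite <- hph in HN'.
  pose proof (Num_upper k B n i j hn0 hm0 hi hj) as HU. fold m in HU.
  pose proof (compare k B n i0 j0 i j hk hB hn0 ltac:(fold nR K; lra) hi0 hj0 hi hj ltac:(fold m in HL, HN', HU |- *; lra)) as HC.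
  fold m nR mR K in HC. fold x0 y0 in HC.
  set (x := INR i / nR) in *. set (y := INR j / mR) in *.
  assert (lnD : ln (INR (S n) * INR (S m)) <= 4 * sqrt (2 * K) * sqrt nR).
  { rewrite !S_INR. fold nR mR.
    assert (nR + 1 <= 2 * K * nR) by nra. assert (mR + 1 <= 2 * K * nR) by nra.
    rewrite ln_mult by lra.
    pose proof (ln_le' (nR + 1) (2 * K * nR) ltac:(lra) H).
    pose proof (ln_le' (mR + 1) (2 * K * nR) ltac:(lra) H0).
    pose proof (ln_le_sqrt (2 * K * nR) ltac:(nra)).
    rewrite sqrt_mult in H3 by nra. lra. }
  assert (ln2 : ln 2 <= 1) by (pose proof (ln_le_sub1 2 ltac:(lra)); lra).
  assert (hsn : 0 < sqrt nR) by (apply sqrt_lt_R0; lra).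
  assert (snn : sqrt nR * sqrt nR = nR) by (apply sqrt_sqrt; lra).
  assert (hc1n : c1 < sqrt nR).
  { rewrite <- (sqrt_pow2 c1) by auto. apply sqrt_lt_1_alt. split. nra. lra. }
  assert (err : 2 * B ^ 2 + ln 2 + ln (INR (S n) * INR (S m)) < nR * (eta / 2)).
  { assert (c0 * 4 < nR * eta).
    { assert (4 * c0 / eta < nR) by lra. apply Rmult_lt_compat_r with (r := eta) in H; auto.
      unfold Rdiv in H. rewrite Rmult_assoc, Rinv_l in H by lra. lra. }
    assert (4 * sqrt (2 * K) * sqrt nR * 4 < nR * eta).
    { assert (16 * sqrt (2 * K) < sqrt nR * eta).
      { unfold c1 in hc1n. apply Rmult_lt_compat_r with (r := eta) in hc1n; auto.
        unfold Rdiv in hc1n. rewrite Rmult_assoc, Rinv_l in hc1n by lra. lra. }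
      assert (16 * sqrt (2 * K) * sqrt nR < sqrt nR * eta * sqrt nR) by (apply Rmult_lt_compat_r; auto). assert (sqrt nR * eta * sqrt nR = nR * eta) by (transitivity (sqrt nR * sqrt nR * eta); [ring | rewrite snn; ring]). lra. }
    unfold c0 in H. lra. }
  assert (Fbig : Fr K B xs ys - eta < Fr K B x y).
  { assert (nR * Fr K B x0 y0 - nR * (eta/2) < nR * Fr K B x y) by lra.
    assert (Fr K B x0 y0 - eta / 2 < Fr K B x y).
    { apply Rmult_lt_reg_l with nR. lra. rewrite Rmult_minus_distr_l. lra. }
    lra. }
  assert (hx : 0 <= x <= 1) by (apply div_unit; auto).
  assert (hy : 0 <= y <= 1) by (apply div_unit; auto).
  assert (majxy : (1 + K) / 2 <= x + K * y).
  { unfold x, y. rewrite emR. rewrite !plus_INR in majij. fold nR mR in majij.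
    apply Rmult_le_reg_r with nR. lra. replace ((INR i / nR + K * (INR j / (K * nR))) * nR) with (INR i + INR j) by (field; lra). rewrite emR in majij. lra. }
  rewrite <- hph. simpl. fold nR mR. fold x y.
  split.
  - destruct (Rlt_or_le (Rabs (x - xs)) eps) as [h|h]; auto.
    pose proof (Hg x y hx hy majxy (or_introl h)). fold K in H. lra.
  - destruct (Rlt_or_le (Rabs (y - ys)) eps) as [h|h]; auto.
    pose proof (Hg x y hx hy majxy (or_intror h)). fold K in H. lra.
Qed.


Lemma exp_ath w : -1 < w < 1 -> exp (- (2 * ath w)) = (1 - w) / (1 + w).
Proof.
  intros hw. unfold ath. replace (- (2 * ((ln (1 + w) - ln (1 - w)) / 2))) with (ln (1 - w) + - ln (1 + w)) by field.
  rewrite exp_plus, exp_Ropp, !exp_ln by lra. field. lra.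
Qed.

Lemma conv_of (u : nat -> R) l : (forall eps, 0 < eps -> exists N, forall n, (N <= n)%nat -> Rabs (u n - l) < eps) ->
  Un_cv u l.
Proof. intros h eps he. destruct (h eps he) as [N HN]. exists N. intros n hn. unfold R_dist. apply HN. lia. Qed.

Theorem lemma11 (k : nat) (B : R) (hk : (1 <= k)%nat) (hB : 0 < B)
  (ahat : nat -> R * R)
  (hmax : forall n : nat, (1 <= n)%nat -> B < INR n * sqrt (INR k) ->
            forall a : R * R, Pr k B n a <= Pr k B n (ahat n)) :
  (B <= 2 ->
     Un_cv (fun n => fst (ahat n)) (1/2) /\ Un_cv (fun n => snd (ahat n)) (1/2)) /\
  (2 < B ->
     exists aL aR : R,
       (1/2 < aL < 1 /\ 1/2 < aR < 1 /\
        exp (B * sqrt (INR k) * (1 - 2 * aR)) = (1 - aL) / aL /\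
        exp (B / sqrt (INR k) * (1 - 2 * aL)) = (1 - aR) / aR) /\
       (forall bL bR : R,
          1/2 < bL < 1 -> 1/2 < bR < 1 ->
          exp (B * sqrt (INR k) * (1 - 2 * bR)) = (1 - bL) / bL ->
          exp (B / sqrt (INR k) * (1 - 2 * bL)) = (1 - bR) / bR ->
          bL = aL /\ bR = aR) /\
       Un_cv (fun n => fst (ahat n)) aL /\ Un_cv (fun n => snd (ahat n)) aR).
Proof.
  assert (hK : 1 <= INR k) by (apply (le_INR 1); lia).
  pose proof (sqrt_lt_R0 (INR k) ltac:(lra)) as hs.
  split.
  - intros hB2. pose proof (gap_small (INR k) B hK hB hB2) as G.
    pose proof (main_conv k B hk hB ahat hmax _ _ G) as M.
    split; apply conv_of; intros eps he; destruct (M eps he) as [N HN]; exists N; intros n hn;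
      apply (HN n hn).
  - intros hB2. destruct (gap_big (INR k) B hK hB hB2) as [us [hus [eus G]]].
    set (a := B * sqrt (INR k) / 2) in *. set (b := B / (2 * sqrt (INR k))) in *.
    assert (ha : 0 < a) by (unfold a; nra).
    assert (hb : 0 < b) by (unfold b; apply Rdiv_lt_0_compat; lra).
    assert (hab : 1 < a * b) by (unfold a, b; field_simplify; [nra|lra]).
    set (vs := th (b * us)) in *.
    assert (hvs : 0 < vs < 1) by (unfold vs; split; [apply th_pos; nra | apply th_bound]).
    assert (e1 : a * vs = ath us) by (unfold phi in eus; fold vs in eus; lra).
    assert (e2 : ath vs = b * us) by (unfold vs; apply ath_th).
    assert (eBa : B * sqrt (INR k) = 2 * a) by (unfold a; field).
    assert (eBb : B / sqrt (INR k) = 2 * b) by (unfold b; field; lra).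
    exists ((1 + us) / 2), ((1 + vs) / 2).
    split; [|split].
    + split; [lra|split; [lra|split]].
      * rewrite eBa. replace (2 * a * (1 - 2 * ((1 + vs) / 2))) with (- (2 * (a * vs))) by field.
        rewrite e1, exp_ath by lra. field. lra.
      * rewrite eBb. replace (2 * b * (1 - 2 * ((1 + us) / 2))) with (- (2 * (b * us))) by field.
        rewrite <- e2, exp_ath by lra. field. lra.
    + intros bL bR hbL hbR q1 q2.
      set (u' := 2 * bL - 1). set (v' := 2 * bR - 1).
      assert (hu' : 0 < u' < 1) by (unfold u'; lra). assert (hv' : 0 < v' < 1) by (unfold v'; lra).
      rewrite eBa in q1. rewrite eBb in q2.
      replace (2 * a * (1 - 2 * bR)) with (- (2 * (a * v'))) in q1 by (unfold v'; ring).
      replace (2 * b * (1 - 2 * bL)) with (- (2 * (b * u'))) in q2 by (unfold u'; ring).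
      replace ((1 - bL) / bL) with ((1 - u') / (1 + u')) in q1 by (unfold u'; field; lra).
      replace ((1 - bR) / bR) with ((1 - v') / (1 + v')) in q2 by (unfold v'; field; lra).
      rewrite <- exp_ath in q1, q2 by lra.
      apply (f_equal ln) in q1. apply (f_equal ln) in q2. rewrite !ln_exp in q1, q2.
      assert (f1 : a * v' = ath u') by lra.
      assert (f2 : ath v' = b * u') by lra.
      assert (f3 : v' = th (b * u')) by (rewrite <- f2; symmetry; apply th_ath; lra).
      assert (phi a b u' = 0) by (unfold phi; rewrite <- f3; lra).
      pose proof (root_unique a b u' us ha hb hab hu' H hus eus) as ru.
      assert (v' = vs) by (unfold vs; rewrite f3, ru; reflexivity).
      unfold u', v' in *. split; lra.
    + pose proof (main_conv k B hk hB ahat hmax _ _ G) as M. fold vs in M.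
      split; apply conv_of; intros eps he; destruct (M eps he) as [N HN]; exists N; intros n hn;
        apply (HN n hn).
Qed.
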